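(* In the instance of Outcome Logic with variable assignment described below, for every well-formed program $C$ and all assertions $\varphi,\psi\subseteq\mathcal W(\mathcal S)$: \[\vDash\{\varphi\}\ C\ \{\psi\}\quad\iff\quad\vdash\{\varphi\}\ C\ \{\psi\},\] where $\vdash$ denotes derivability (with no axioms about atomic actions) in the proof system below extended with the rules (Assign) and (Constancy).
   Context: Semiring and weights. Let $\mathcal A=\langle U,+,\cdot,\mathbf 0,\mathbf 1\rangle$ be a partial semiring ($+$ commutative, associative, possibly partial, unit $\mathbf 0$; $\cdot$ total, associative, unit $\mathbf 1$; two-sided distributivity; $\mathbf 0$ annihilates), naturally ordered ($u\le v$ iff $\exists w.\,u+w=v$ is a partial order), Scott continuous ($+$ and $\cdot$ preserve suprema of directed sets in each argument), with a top element. Infinite sums are suprema of finite partial sums. $\mathcal W(X)$: maps $m:X\to U$ with countable support $\mathrm{supp}(m)=\{x:m(x)\ne\mathbf 0\}$ and defined mass $|m|=\sum_{x\in\mathrm{supp}(m)}m(x)$; operations $+$, $u\cdot m$, $m\cdot u$ pointwise; $m_1\sqsubseteq m_2$ iff $m_1+m=m_2$ for some $m$. $\eta(x)(y)=\mathbf 1$ if $x=y$ else $\mathbf 0$; $f^\dagger(m)(y)=\sum_{x\in\mathrm{supp}(m)}m(x)\cdot f(x)(y)$. State instance. $\mathsf{Var}$ is a countable set of variables, $\mathsf{Val}=\mathbb Z$, states are stores $s\in\mathcal S=\mathsf{Var}\to\mathsf{Val}$, and $s[x\mapsto v]$ is the updated store. Atomic actions are assignments $x:=E$ where $E::=x\mid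 v\mid b\mid E_1+E_2\mid E_1-E_2\mid E_1\times E_2$ ($v\in\mathsf{Val}$, $b$ a test) with the standard evaluation $[\![E]\!]_{\mathsf{Exp}}(s)\in\mathsf{Val}$; $[\![x:=E]\!]_{\mathsf{Act}}(s)=\eta(s[x\mapsto[\![E]\!]_{\mathsf{Exp}}(s)])$. Primitive tests are all subsets of $\mathcal S$. Programs. $C::=\mathsf{skip}\mid C_1;C_2\mid C_1+C_2\mid\mathsf{assume}\ e\mid C^{\langle e,e'\rangle}\mid x:=E$; $e::=b\mid u$ ($u\in U$); tests $b$ are Boolean combinations of $\mathsf{true},\mathsf{false}$ and primitive tests $t$, evaluating to $\mathbf 1$ (true) or $\mathbf 0$ (false) with $[\![t]\!](s)=\mathbf 1$ iff $s\in t$; $[\![u]\!](s)=u$. Semantics: $[\![\mathsf{skip}]\!](s)=\eta(s)$; $[\![C_1;C_2]\!](s)=[\![C_2]\!]^\dagger([\![C_1]\!](s))$; $[\![C_1+C_2]\!](s)=[\![C_1]\!](s)+[\![C_2]\!](s)$; $[\![\mathsf{assume}\ e]\!](s)=[\![e]\!](s)\cdot\eta(s)$; $[\![C^{\langle e,e'\rangle}]\!]$ is the least fixed point (pointwise order) of $\Phi(f)(s)=[\![e]\!](s)\cdot f^\dagger([\![C]\!](s))+[\![e']\!](s)\cdot\eta(s)$. Well-formed: semantics total. Assertions. Subsets of $\mathcal W(\mathcal S)$; $\bigoplus_{x\in T}\phi(x)=\{\sum_{t\in T}m_t:m_t\in\phi(t)\ \forall t\}$, $\varphi\oplus\psi$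 the binary case; $u\odot\varphi=\{u\cdot m:m\in\varphi\}$, $\varphi\odot u=\{m\cdot u:m\in\varphi\}$; for $P\subseteq\mathcal S$, $\Box P=\{m:\mathrm{supp}(m)\subseteq P\}$. $\vDash\{\varphi\}C\{\psi\}$ iff $[\![C]\!]^\dagger(m)\in\psi$ for all $m\in\varphi$. Substitution: $\varphi[E/x]=\{m\in\mathcal W(\mathcal S): (\lambda s.\eta(s[x\mapsto[\![E]\!]_{\mathsf{Exp}}(s)]))^\dagger(m)\in\varphi\}$. Free variables of $P\subseteq\mathcal S$: $\mathrm{free}(P)=\{x:\exists s\in P,v\in\mathsf{Val}.\ s[x\mapsto v]\notin P\}$. Modified variables: $\mathrm{mod}(\mathsf{skip})=\mathrm{mod}(\mathsf{assume}\ e)=\emptyset$, $\mathrm{mod}(C_1;C_2)=\mathrm{mod}(C_1+C_2)=\mathrm{mod}(C_1)\cup\mathrm{mod}(C_2)$, $\mathrm{mod}(C^{\langle e,e'\rangle})=\mathrm{mod}(C)$, $\mathrm{mod}(x:=E)=\{x\}$. Proof system rules: (Skip) $\{\varphi\}\mathsf{skip}\{\varphi\}$; (Seq) $\{\varphi\}C_1\{\vartheta\},\{\vartheta\}C_2\{\psi\}\Rightarrow\{\varphi\}C_1;C_2\{\psi\}$; (Plus) $\{\varphi\}C_1\{\psi_1\},\{\varphi\}C_2\{\psi_2\}\Rightarrow\{\varphi\}C_1+C_2\{\psi_1\oplus\psi_2\}$; (Assume) if $[\![e]\!](s)=u$ for all $m\in\varphi$, $s\in\mathrm{supp}(m)$,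 then $\{\varphi\}\mathsf{assume}\ e\{\varphi\odot u\}$; (Iter) if $(\psi_n)_{n\in\mathbb N}$ converges to $\psi_\infty$ (whenever $m_n\in\psi_n$ for all $n$, $\sum_n m_n\in\psi_\infty$) and for all $n$, $\{\varphi_n\}\mathsf{assume}\ e;C\{\varphi_{n+1}\}$ and $\{\varphi_n\}\mathsf{assume}\ e'\{\psi_n\}$, then $\{\varphi_0\}C^{\langle e,e'\rangle}\{\psi_\infty\}$; (False) $\{\emptyset\}C\{\varphi\}$; (True) $\{\varphi\}C\{\mathcal W(\mathcal S)\}$; (Scale) $\{\varphi\}C\{\psi\}\Rightarrow\{u\odot\varphi\}C\{u\odot\psi\}$; (Disj), (Conj): from two triples infer the triple with $\cup$, resp. $\cap$, of pre- and postconditions; (Choice) $\forall t\in T.\{\phi(t)\}C\{\phi'(t)\}\Rightarrow\{\bigoplus_{x\in T}\phi(x)\}C\{\bigoplus_{x\in T}\phi'(x)\}$; (Exists) same premises $\Rightarrow\{\bigcup_t\phi(t)\}C\{\bigcup_t\phi'(t)\}$; (Consequence) $\varphi'\subseteq\varphi$, $\{\varphi\}C\{\psi\}$, $\psi\subseteq\psi'\Rightarrow\{\varphi'\}C\{\psi'\}$; (Assign) $\{\varphi[E/x]\}\ x:=E\ \{\varphi\}$; (Constancy) if $\{\varphi\}C\{\psi\}$ and $\mathrm{free}(P)\cap\mathrm{mod}(C)=\emptyset$ then $\{\varphi\cap\Box P\}C\{\psi\cap\Box P\}$. *)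

(* Defs.v *)
From Stdlib Require Import ZArith List Classical ClassicalEpsilon.
Import ListNotations.
Set Implicit Arguments.

Definition nle {U : Type} (add : U -> U -> option U) (u v : U) : Prop :=
  exists w, add u w = Some v.

Definition is_sup {U : Type} (add : U -> U -> option U) (D : U -> Prop) (v : U) : Prop :=
  (forall d, D d -> nle add d v) /\
  (forall w, (forall d, D d -> nle add d w) -> nle add v w).

Definition directed {U : Type} (add : U -> U -> option U) (D : U -> Prop) : Prop :=
  (exists d, D d) /\
  (forall a b, D a -> D b -> exists c, D c /\ nle add a c /\ nle add b c).

Definition obind {A B : Type} (f : A -> option B) (o : option A) : option B :=
  match o with Some a => f a | None => None end.

Record PSR := {
  car :> Type;
  add : car -> car -> option car;
  mul : car -> car -> car;
  zero : car;
  one : car;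
  add_comm : forall a b, add a b = add b a;
  add_assoc : forall a b c,
    obind (fun ab => add ab c) (add a b) = obind (fun bc => add a bc) (add b c);
  add_0l : forall a, add zero a = Some a;
  mul_assoc : forall a b c, mul a (mul b c) = mul (mul a b) c;
  mul_1l : forall a, mul one a = a;
  mul_1r : forall a, mul a one = a;
  mul_addr : forall u v w vw, add v w = Some vw ->
    add (mul u v) (mul u w) = Some (mul u vw);
  mul_addl : forall u v w vw, add v w = Some vw ->
    add (mul v u) (mul w u) = Some (mul vw u);
  mul_0l : forall a, mul zero a = zero;
  mul_0r : forall a, mul a zero = zero;
  (* naturally ordered: u <= v iff exists w, u + w = v is a partial order
     (reflexivity and transitivity hold automatically) *)
  nle_antisym : forall u v, nle add u v -> nle add v u -> u = v;
  dcpo : forall D, directed add D -> exists v, is_sup add D v;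
  add_cont : forall u D d, directed add D -> is_sup add D d ->
    forall v, add u d = Some v <->
      ((forall x, D x -> exists w, add u x = Some w) /\
       is_sup add (fun w => exists x, D x /\ add u x = Some w) v);
  mul_contr : forall u D d, directed add D -> is_sup add D d ->
    is_sup add (fun w => exists x, D x /\ w = mul u x) (mul u d);
  mul_contl : forall u D d, directed add D -> is_sup add D d ->
    is_sup add (fun w => exists x, D x /\ w = mul x u) (mul d u);
  has_top : exists t, forall u, nle add u t
}.

Arguments add {_}.
Arguments mul {_}.
Arguments zero {_}.
Arguments one {_}.


Fixpoint fsum {A : PSR} {I : Type} (a : I -> A) (l : list I) : option A :=
  match l with
  | [] => Some zero
  | i :: l' => obind (fun r => add (a i) r) (fsum a l')
  end.

Definition HasSum {A : PSR} {I : Type} (P : I -> Prop) (a : I -> A) (v : A) : Prop :=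
  (forall l, NoDup l -> Forall P l -> exists r, fsum a l = Some r) /\
  is_sup add (fun r => exists l, NoDup l /\ Forall P l /\ fsum a l = Some r) v.

Definition countable {X : Type} (P : X -> Prop) : Prop :=
  exists f : nat -> option X, forall x, P x -> exists n, f n = Some x.

Definition supp {A : PSR} {X : Type} (m : X -> A) : X -> Prop :=
  fun x => m x <> zero.

Definition isW {A : PSR} {X : Type} (m : X -> A) : Prop :=
  countable (supp m) /\ exists v, HasSum (supp m) m v.

Definition WPlus {A : PSR} {X : Type} (m1 m2 m : X -> A) : Prop :=
  forall x, add (m1 x) (m2 x) = Some (m x).

Definition Wle {A : PSR} {X : Type} (m1 m2 : X -> A) : Prop :=
  exists m, isW m /\ WPlus m1 m m2.

Definition WSum {A : PSR} {X T : Type} (ms : T -> X -> A) (m : X -> A) : Prop :=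
  isW m /\ forall x, HasSum (fun _ : T => True) (fun t => ms t x) (m x).

Definition lscale {A : PSR} {X : Type} (u : A) (m : X -> A) : X -> A :=
  fun x => mul u (m x).
Definition rscale {A : PSR} {X : Type} (m : X -> A) (u : A) : X -> A :=
  fun x => mul (m x) u.

Definition eta {A : PSR} {X : Type} (x : X) : X -> A :=
  fun y => if excluded_middle_informative (x = y) then one else zero.

Definition Bind {A : PSR} {X Y : Type} (f : X -> Y -> A) (m : X -> A) (m' : Y -> A) : Prop :=
  isW m /\ (forall x, isW (f x)) /\ isW m' /\
  forall y, HasSum (supp m) (fun x => mul (m x) (f x y)) (m' y).

Definition Var := nat.
Definition Val := Z.
Definition state := Var -> Val.

Definition update (s : state) (x : Var) (v : Val) : state :=
  fun y => if Nat.eqb y x then v else s y.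

Inductive test :=
  | TTrue | TFalse
  | TPrim (t : state -> Prop)
  | TNot (b : test)
  | TAnd (b1 b2 : test)
  | TOr (b1 b2 : test).

Fixpoint tholds (b : test) (s : state) : Prop :=
  match b with
  | TTrue => True
  | TFalse => False
  | TPrim t => t s
  | TNot b => ~ tholds b s
  | TAnd b1 b2 => tholds b1 s /\ tholds b2 s
  | TOr b1 b2 => tholds b1 s \/ tholds b2 s
  end.

Inductive exp :=
  | EVar (x : Var)
  | EVal (v : Val)
  | ETest (b : test)
  | EAdd (E1 E2 : exp)
  | ESub (E1 E2 : exp)
  | EMul (E1 E2 : exp).

Fixpoint eeval (E : exp) (s : state) : Val :=
  match E with
  | EVar x => s x
  | EVal v => v
  | ETest b => if excluded_middle_informative (tholds b s) then 1%Z else 0%Z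
  | EAdd E1 E2 => (eeval E1 s + eeval E2 s)%Z
  | ESub E1 E2 => (eeval E1 s - eeval E2 s)%Z
  | EMul E1 E2 => (eeval E1 s * eeval E2 s)%Z
  end.

Inductive gexp (A : PSR) :=
  | GTest (b : test)
  | GWeight (u : A).
Arguments GTest {A}.
Arguments GWeight {A}.

Definition geval {A : PSR} (e : gexp A) (s : state) : A :=
  match e with
  | GTest b => if excluded_middle_informative (tholds b s) then one else zero
  | GWeight u => u
  end.

Inductive cmd (A : PSR) :=
  | Skip
  | Seq (C1 C2 : cmd A)
  | Choice (C1 C2 : cmd A)
  | Assume (e : gexp A)
  | Iter (C : cmd A) (e e' : gexp A)
  | Assign (x : Var) (E : exp).
Arguments Skip {A}.
Arguments Assume {A}.
Arguments Assign {A}.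

(* Semantics: Sem C f  means  [[C]] = f  (as a total map state -> W(state)) *)

Definition kernel (A : PSR) := state -> state -> A.

(* Phi(f) = h  for the iteration C^<e,e'> with [[C]] = g *)
Definition PhiRel {A : PSR} (g : kernel A) (e e' : gexp A) (f h : kernel A) : Prop :=
  forall s, isW (h s) /\ exists k, Bind f (g s) k /\
    WPlus (lscale (geval e s) k) (lscale (geval e' s) (eta s)) (h s).

Definition kle {A : PSR} (f g : kernel A) : Prop := forall s, Wle (f s) (g s).

Definition IsLfp {A : PSR} (g : kernel A) (e e' : gexp A) (f : kernel A) : Prop :=
  (forall s, isW (f s)) /\ PhiRel g e e' f f /\
  forall f', (forall s, isW (f' s)) -> PhiRel g e e' f' f' -> kle f f'.

Inductive Sem {A : PSR} : cmd A -> kernel A -> Prop :=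
  | Sem_skip : Sem Skip (fun s => eta s)
  | Sem_seq : forall C1 C2 f1 f2 f,
      Sem C1 f1 -> Sem C2 f2 -> (forall s, Bind f2 (f1 s) (f s)) ->
      Sem (Seq C1 C2) f
  | Sem_choice : forall C1 C2 f1 f2 f,
      Sem C1 f1 -> Sem C2 f2 -> (forall s, isW (f s) /\ WPlus (f1 s) (f2 s) (f s)) ->
      Sem (Choice C1 C2) f
  | Sem_assume : forall e, Sem (Assume e) (fun s => lscale (geval e s) (eta s))
  | Sem_iter : forall C e e' g f,
      Sem C g -> IsLfp g e e' f -> Sem (Iter C e e') f
  | Sem_assign : forall x E, Sem (Assign x E) (fun s => eta (update s x (eeval E s))).

Definition well_formed {A : PSR} (C : cmd A) : Prop := exists f, Sem C f.

Definition assn (A : PSR) := (state -> A) -> Prop.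

Definition IsAssn {A : PSR} (P : assn A) : Prop := forall m, P m -> isW m.

Definition valid {A : PSR} (P : assn A) (C : cmd A) (Q : assn A) : Prop :=
  forall f, Sem C f -> forall m, P m -> exists m', Bind f m m' /\ Q m'.

Definition aW {A : PSR} : assn A := fun m => isW m.
Definition aFalse {A : PSR} : assn A := fun _ => False.
Definition aoplus {A : PSR} (P Q : assn A) : assn A :=
  fun m => isW m /\ exists m1 m2, P m1 /\ Q m2 /\ WPlus m1 m2 m.
Definition abigoplus {A : PSR} {T : Type} (Ph : T -> assn A) : assn A :=
  fun m => exists ms : T -> state -> A, (forall t, Ph t (ms t)) /\ WSum ms m.
Definition abigcup {A : PSR} {T : Type} (Ph : T -> assn A) : assn A :=
  fun m => exists t, Ph t m.
Definition alscale {A : PSR} (u : A) (P : assn A) : assn A :=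
  fun m => exists m0, P m0 /\ m = lscale u m0.
Definition arscale {A : PSR} (P : assn A) (u : A) : assn A :=
  fun m => exists m0, P m0 /\ m = rscale m0 u.
Definition acup {A : PSR} (P Q : assn A) : assn A := fun m => P m \/ Q m.
Definition acap {A : PSR} (P Q : assn A) : assn A := fun m => P m /\ Q m.
Definition aincl {A : PSR} (P Q : assn A) : Prop := forall m, P m -> Q m.
Definition abox {A : PSR} (P : state -> Prop) : assn A :=
  fun m => isW m /\ forall s, supp m s -> P s.

Definition asubst {A : PSR} (P : assn A) (E : exp) (x : Var) : assn A :=
  fun m => isW m /\ exists m', Bind (fun s => eta (update s x (eeval E s))) m m' /\ P m'.

Definition converges {A : PSR} (ps : nat -> assn A) (pinf : assn A) : Prop :=
  forall ms : nat -> state -> A, (forall n, ps n (ms n)) ->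
    forall m, WSum ms m -> pinf m.

Definition free (P : state -> Prop) (x : Var) : Prop :=
  exists s v, P s /\ ~ P (update s x v).

Fixpoint modv {A : PSR} (C : cmd A) (x : Var) : Prop :=
  match C with
  | Skip | Assume _ => False
  | Seq C1 C2 | Choice C1 C2 => modv C1 x \/ modv C2 x
  | Iter C _ _ => modv C x
  | Assign y _ => x = y
  end.

Inductive Deriv {A : PSR} : assn A -> cmd A -> assn A -> Prop :=
  | D_skip : forall P, IsAssn P -> Deriv P Skip P
  | D_seq : forall P R Q C1 C2,
      Deriv P C1 R -> Deriv R C2 Q -> Deriv P (Seq C1 C2) Q
  | D_plus : forall P Q1 Q2 C1 C2,
      Deriv P C1 Q1 -> Deriv P C2 Q2 -> Deriv P (Choice C1 C2) (aoplus Q1 Q2)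
  | D_assume : forall P e u, IsAssn P -> IsAssn (arscale P u) ->
      (forall m s, P m -> supp m s -> geval e s = u) ->
      Deriv P (Assume e) (arscale P u)
  | D_iter : forall (Ps Qs : nat -> assn A) Qinf C e e', IsAssn Qinf ->
      converges Qs Qinf ->
      (forall n, Deriv (Ps n) (Seq (Assume e) C) (Ps (S n))) ->
      (forall n, Deriv (Ps n) (Assume e') (Qs n)) ->
      Deriv (Ps 0) (Iter C e e') Qinf
  | D_false : forall C Q, IsAssn Q -> Deriv aFalse C Q
  | D_true : forall P C, IsAssn P -> Deriv P C aW
  | D_scale : forall P Q C u, IsAssn (alscale u P) -> IsAssn (alscale u Q) ->
      Deriv P C Q -> Deriv (alscale u P) C (alscale u Q)
  | D_disj : forall P1 P2 Q1 Q2 C,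
      Deriv P1 C Q1 -> Deriv P2 C Q2 -> Deriv (acup P1 P2) C (acup Q1 Q2)
  | D_conj : forall P1 P2 Q1 Q2 C,
      Deriv P1 C Q1 -> Deriv P2 C Q2 -> Deriv (acap P1 P2) C (acap Q1 Q2)
  | D_choice : forall (T : Type) (Ph Ph' : T -> assn A) C,
      (forall t, Deriv (Ph t) C (Ph' t)) ->
      Deriv (abigoplus Ph) C (abigoplus Ph')
  | D_exists : forall (T : Type) (Ph Ph' : T -> assn A) C,
      (forall t, Deriv (Ph t) C (Ph' t)) ->
      Deriv (abigcup Ph) C (abigcup Ph')
  | D_conseq : forall P P' Q Q' C, IsAssn P' -> IsAssn Q' ->
      aincl P' P -> Deriv P C Q -> aincl Q Q' -> Deriv P' C Q'
  | D_assign : forall P x E, IsAssn P -> Deriv (asubst P E x) (Assign x E) P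
  | D_constancy : forall P Q C (B : state -> Prop),
      Deriv P C Q -> (forall x, free B x -> modv C x -> False) ->
      Deriv (acap P (abox B)) C (acap Q (abox B)).

(* Main.v *)
Require Import Defs.
From Stdlib Require Import ZArith Lia List Permutation Arith Cantor Classical ClassicalEpsilon FunctionalExtensionality PropExtensionality.
Import ListNotations.

Section Alg.
Context {A : PSR}.

Definition le (u v : A) := nle add u v.

Definition oadd (o1 o2 : option A) : option A :=
  match o1, o2 with Some a, Some b => add a b | _, _ => None end.
Arguments oadd : simpl never.

Lemma oadd_SS (a b : A) : oadd (Some a) (Some b) = add a b.
Proof. reflexivity. Qed.

Lemma oadd_comm o1 o2 : oadd o1 o2 = oadd o2 o1.
Proof. destruct o1, o2; unfold oadd; auto using add_comm. Qed.

Lemma oadd_assoc o1 o2 o3 : oadd (oadd o1 o2) o3 = oadd o1 (oadd o2 o3).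
Proof.
  destruct o1 as [a|], o2 as [b|], o3 as [c|]; unfold oadd; auto;
  try (destruct (add a b); auto; fail); try (destruct (add b c); auto; fail).
  pose proof (add_assoc A a b c) as H. simpl in H. exact H.
Qed.

Lemma oadd_0l o : oadd (Some zero) o = o.
Proof. destruct o; unfold oadd; auto using add_0l. Qed.

Lemma oadd_0r o : oadd o (Some zero) = o.
Proof. rewrite oadd_comm; apply oadd_0l. Qed.

Lemma oadd_None_r o : oadd o None = None.
Proof. destruct o; unfold oadd; auto. Qed.

Lemma add_0r (a : A) : add a zero = Some a.
Proof. rewrite add_comm; apply add_0l. Qed.

Lemma le_refl (a : A) : le a a.
Proof. exists zero; apply add_0r. Qed.

Lemma le_trans {a b c : A} : le a b -> le b c -> le a c.
Proof.
  intros [w1 H1] [w2 H2].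
  assert (E : oadd (oadd (Some a) (Some w1)) (Some w2) = Some c) by (rewrite oadd_SS, H1; exact H2).
  rewrite oadd_assoc, (oadd_SS w1) in E.
  destruct (add w1 w2) as [w|] eqn:Hw; [|discriminate].
  exists w; exact E.
Qed.

Lemma le_0 (a : A) : le zero a.
Proof. exists a; apply add_0l. Qed.

Lemma le_zero {a : A} : le a zero -> a = zero.
Proof. intros H; apply nle_antisym; auto. apply le_0. Qed.

Lemma le_antisym {a b : A} : le a b -> le b a -> a = b.
Proof. apply nle_antisym. Qed.

Lemma le_addl {a b c : A} : add a b = Some c -> le a c.
Proof. intros H; exists b; auto. Qed.

Lemma le_addr {a b c : A} : add a b = Some c -> le b c.
Proof. intros H; exists a; rewrite add_comm; auto. Qed.

Lemma add_mono_l {a a' b r' : A} : le a a' -> add a' b = Some r' ->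
  exists r, add a b = Some r /\ le r r'.
Proof.
  intros [c Hc] H.
  assert (E : oadd (oadd (Some a) (Some c)) (Some b) = Some r') by (rewrite oadd_SS, Hc; exact H).
  rewrite oadd_assoc, (oadd_comm (Some c)), <- oadd_assoc, (oadd_SS a b) in E.
  destruct (add a b) as [r|] eqn:Hr; [|discriminate].
  exists r; split; auto. exists c; exact E.
Qed.

Lemma add_mono {a a' b b' r' : A} : le a a' -> le b b' -> add a' b' = Some r' ->
  exists r, add a b = Some r /\ le r r'.
Proof.
  intros Ha Hb H.
  destruct (add_mono_l Ha H) as [r1 [H1 L1]].
  rewrite add_comm in H1.
  destruct (add_mono_l Hb H1) as [r2 [H2 L2]].
  exists r2; split. rewrite add_comm; auto. eapply le_trans; eauto.
Qed.

Lemma add_mono_eq {a a' b b' r r' : A} : le a a' -> le b b' -> add a' b' = Some r' ->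
  add a b = Some r -> le r r'.
Proof.
  intros Ha Hb H H'. destruct (add_mono Ha Hb H) as [r0 [E L]].
  rewrite H' in E; inversion E; subst; auto.
Qed.

Lemma mul_mono_l (u : A) {a b : A} : le a b -> le (mul u a) (mul u b).
Proof. intros [w H]. exists (mul u w). apply mul_addr; auto. Qed.

Lemma mul_mono_r (u : A) {a b : A} : le a b -> le (mul a u) (mul b u).
Proof. intros [w H]. exists (mul w u). apply mul_addl; auto. Qed.

Lemma add_zero_zero : add (@zero A) zero = Some (@zero A).
Proof. apply add_0l. Qed.

Lemma add_nonzero {a b c : A} : add a b = Some c -> c <> zero -> a <> zero \/ b <> zero.
Proof.
  intros H Hc. destruct (classic (a = zero)) as [Ha|Ha]; auto.
  subst. rewrite add_0l in H. inversion H; subst. auto.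
Qed.

Definition ofsum {I : Type} (b : I -> option A) (l : list I) : option A :=
  fold_right (fun i r => oadd (b i) r) (Some zero) l.

Lemma fsum_ofsum {I : Type} (a : I -> A) l : fsum a l = ofsum (fun i => Some (a i)) l.
Proof. induction l; simpl; auto. rewrite IHl. destruct (ofsum _ l); auto. Qed.

Lemma ofsum_app {I : Type} (b : I -> option A) l1 l2 :
  ofsum b (l1 ++ l2) = oadd (ofsum b l1) (ofsum b l2).
Proof. induction l1; simpl. rewrite oadd_0l; auto. rewrite IHl1, oadd_assoc; auto. Qed.

Lemma ofsum_perm {I : Type} (b : I -> option A) {l l'} : Permutation l l' -> ofsum b l = ofsum b l'.
Proof.
  induction 1; simpl; auto.
  - rewrite IHPermutation; auto.
  - rewrite <- !oadd_assoc, (oadd_comm (b y)); auto.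
  - congruence.
Qed.

Lemma ofsum_oadd {I : Type} (b c : I -> option A) l :
  ofsum (fun i => oadd (b i) (c i)) l = oadd (ofsum b l) (ofsum c l).
Proof.
  induction l; simpl. rewrite oadd_0l; auto.
  rewrite IHl. rewrite !oadd_assoc. f_equal.
  rewrite <- !oadd_assoc. f_equal. apply oadd_comm.
Qed.

Lemma ofsum_swap {I J : Type} (b : I -> J -> option A) li lj :
  ofsum (fun i => ofsum (b i) lj) li = ofsum (fun j => ofsum (fun i => b i j) li) lj.
Proof.
  induction li; simpl.
  - induction lj; simpl; auto. rewrite <- IHlj, oadd_0l; auto.
  - rewrite IHli. rewrite <- ofsum_oadd. auto.
Qed.

Lemma ofsum_ext {I : Type} (b c : I -> option A) l : (forall i, In i l -> b i = c i) -> ofsum b l = ofsum c l.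
Proof. induction l; simpl; intros H; auto. rewrite H, IHl; auto. Qed.

Lemma ofsum_map {I J : Type} (b : I -> option A) (g : J -> I) l : ofsum b (map g l) = ofsum (fun j => b (g j)) l.
Proof. induction l; simpl; congruence. Qed.

Lemma fsum_app {I : Type} (a : I -> A) l1 l2 : fsum a (l1 ++ l2) = oadd (fsum a l1) (fsum a l2).
Proof. rewrite !fsum_ofsum; apply ofsum_app. Qed.

Lemma fsum_perm {I : Type} (a : I -> A) {l l'} : Permutation l l' -> fsum a l = fsum a l'.
Proof. rewrite !fsum_ofsum; apply ofsum_perm. Qed.

Lemma fsum_map {I J : Type} (a : I -> A) (g : J -> I) l : fsum a (map g l) = fsum (fun j => a (g j)) l.
Proof. rewrite !fsum_ofsum, ofsum_map; reflexivity. Qed.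

Lemma fsum_ext {I : Type} (a b : I -> A) l : (forall i, In i l -> a i = b i) -> fsum a l = fsum b l.
Proof. rewrite !fsum_ofsum; intros; apply ofsum_ext; intros; f_equal; auto. Qed.

Lemma fsum_cons {I : Type} (a : I -> A) i l : fsum a (i :: l) = oadd (Some (a i)) (fsum a l).
Proof. simpl. destruct (fsum a l); auto. Qed.

Lemma fsum_add {I : Type} (a b c : I -> A) l : (forall i, add (a i) (b i) = Some (c i)) ->
  fsum c l = oadd (fsum a l) (fsum b l).
Proof.
  intros H. rewrite !fsum_ofsum, <- ofsum_oadd. apply ofsum_ext. intros; rewrite oadd_SS, H; auto.
Qed.

Lemma fsum_zero {I : Type} (l : list I) : fsum (fun _ => (@zero A)) l = Some zero.
Proof. induction l; simpl; auto. rewrite IHl; apply add_0l. Qed.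

Lemma fsum_mul_l {I : Type} (a : I -> A) u {l r} : fsum a l = Some r -> fsum (fun i => mul u (a i)) l = Some (mul u r).
Proof.
  revert r; induction l; simpl; intros r H.
  - inversion H; subst; rewrite mul_0r; auto.
  - destruct (fsum a l) as [r'|]; [|discriminate].
    rewrite (IHl r' eq_refl). apply mul_addr; auto.
Qed.

Lemma fsum_mul_r {I : Type} (a : I -> A) u {l r} : fsum a l = Some r -> fsum (fun i => mul (a i) u) l = Some (mul r u).
Proof.
  revert r; induction l; simpl; intros r H.
  - inversion H; subst; rewrite mul_0l; auto.
  - destruct (fsum a l) as [r'|]; [|discriminate].
    rewrite (IHl r' eq_refl). apply mul_addl; auto.
Qed.

Lemma fsum_mono {I : Type} {a b : I -> A} {l r'} : (forall i, In i l -> le (a i) (b i)) ->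
  fsum b l = Some r' -> exists r, fsum a l = Some r /\ le r r'.
Proof.
  revert r'; induction l; simpl; intros r' H E.
  - exists zero; split; auto. inversion E; apply le_refl.
  - destruct (fsum b l) as [s'|] eqn:Hs; [|discriminate].
    destruct (IHl s') as [s [E1 L1]]; auto.
    rewrite E1. eapply add_mono; eauto.
Qed.

Definition cdec {I : Type} : forall x y : I, {x = y} + {x <> y} :=
  fun x y => excluded_middle_informative (x = y).

Definition cfilter {I : Type} (P : I -> Prop) (l : list I) : list I :=
  filter (fun x => if excluded_middle_informative (P x) then true else false) l.

Lemma cfilter_In {I : Type} (P : I -> Prop) l x : In x (cfilter P l) <-> In x l /\ P x.
Proof.
  unfold cfilter; rewrite filter_In.
  destruct (excluded_middle_informative (P x)); intuition discriminate.
Qed.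

Lemma cfilter_NoDup {I : Type} (P : I -> Prop) l : NoDup l -> NoDup (cfilter P l).
Proof. apply NoDup_filter. Qed.

Lemma fsum_cfilter {I : Type} (a : I -> A) (P : I -> Prop) l :
  (forall i, In i l -> ~ P i -> a i = zero) -> fsum a (cfilter P l) = fsum a l.
Proof.
  induction l; simpl; intros H; auto.
  unfold cfilter in *; simpl.
  destruct (excluded_middle_informative (P a0)).
  - simpl. rewrite IHl; auto.
  - rewrite IHl; auto. rewrite H; auto. destruct (fsum a l); simpl; auto. rewrite add_0l; auto.
Qed.

Lemma incl_perm {I : Type} {l1 l2 : list I} : NoDup l1 -> NoDup l2 -> incl l1 l2 ->
  Permutation l2 (l1 ++ cfilter (fun x => ~ In x l1) l2).
Proof.
  intros N1 N2 Hi. apply NoDup_Permutation; auto.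
  - apply NoDup_app; auto. apply cfilter_NoDup; auto.
    intros x H1 H2. apply cfilter_In in H2. tauto.
  - intros x; rewrite in_app_iff, cfilter_In. split.
    + intros H. destruct (classic (In x l1)); tauto.
    + intros [H|[H _]]; auto.
Qed.

Lemma fsum_incl {I : Type} (a : I -> A) {l1 l2 r} : NoDup l1 -> NoDup l2 -> incl l1 l2 ->
  fsum a l2 = Some r -> exists r1, fsum a l1 = Some r1 /\ le r1 r.
Proof.
  intros N1 N2 Hi E. rewrite (fsum_perm a (incl_perm N1 N2 Hi)), fsum_app in E.
  destruct (fsum a l1) as [r1|]; [|discriminate].
  destruct (fsum a _) as [r2|]; [|discriminate].
  exists r1; split; auto. eapply le_addl; eauto.
Qed.

Definition lunion {I : Type} (l1 l2 : list I) := nodup cdec (l1 ++ l2).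

Lemma lunion_NoDup {I : Type} (l1 l2 : list I) : NoDup (lunion l1 l2).
Proof. apply NoDup_nodup. Qed.

Lemma lunion_incl_l {I : Type} (l1 l2 : list I) : incl l1 (lunion l1 l2).
Proof. intros x H; unfold lunion; rewrite nodup_In; apply in_or_app; auto. Qed.

Lemma lunion_incl_r {I : Type} (l1 l2 : list I) : incl l2 (lunion l1 l2).
Proof. intros x H; unfold lunion; rewrite nodup_In; apply in_or_app; auto. Qed.

End Alg.

Lemma choice_fun {X Y : Type} (R : X -> Y -> Prop) : (forall x, exists y, R x y) -> exists f, forall x, R x (f x).
Proof.
  intros H. exists (fun x => proj1_sig (constructive_indefinite_description _ (H x))).
  intros x. apply (proj2_sig (constructive_indefinite_description _ (H x))).
Qed.

Section Sums.
Context {A : PSR}.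

Definition Sum {I : Type} (a : I -> A) (v : A) := HasSum (fun _ : I => True) a v.
Definition AllDef {I : Type} (a : I -> A) := forall l, NoDup l -> exists r, fsum a l = Some r.
Definition FinS {I : Type} (a : I -> A) (r : A) := exists l, NoDup l /\ fsum a l = Some r.

Lemma is_sup_ext (D D' : A -> Prop) v : (forall x, D x <-> D' x) -> is_sup add D v -> is_sup add D' v.
Proof.
  intros E [H1 H2]. split.
  - intros d Hd; apply H1, E, Hd.
  - intros w Hw; apply H2; intros d Hd; apply Hw, E, Hd.
Qed.

Lemma is_sup_uniq (D : A -> Prop) v w : is_sup add D v -> is_sup add D w -> v = w.
Proof.
  intros [H1 H2] [H3 H4]. apply le_antisym; [apply H2|apply H4]; auto.
Qed.

Lemma Forall_True {I : Type} (l : list I) : Forall (fun _ => True) l.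
Proof. apply Forall_forall; auto. Qed.

Lemma Sum_iff {I : Type} (a : I -> A) v : Sum a v <-> AllDef a /\ is_sup add (FinS a) v.
Proof.
  unfold Sum, HasSum, AllDef, FinS. split.
  - intros [H1 H2]. split.
    + intros l N; apply H1; auto using Forall_True.
    + revert H2; apply is_sup_ext. intros x; split.
      * intros (l & N & _ & E); eauto.
      * intros (l & N & E); exists l; auto using Forall_True.
  - intros [H1 H2]. split.
    + intros l N _; apply H1; auto.
    + revert H2; apply is_sup_ext. intros x; split.
      * intros (l & N & E); exists l; auto using Forall_True.
      * intros (l & N & _ & E); eauto.
Qed.

Lemma FinS_directed {I : Type} {a : I -> A} : AllDef a -> directed add (FinS a).
Proof.
  intros H. split.
  - exists zero, []; split; auto. constructor.
  - intros x y (l1 & N1 & E1) (l2 & N2 & E2).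
    destruct (H (lunion l1 l2) (lunion_NoDup l1 l2)) as [r Er].
    exists r; split; [exists (lunion l1 l2); split; auto using lunion_NoDup|].
    destruct (fsum_incl a N1 (lunion_NoDup l1 l2) (lunion_incl_l l1 l2) Er) as [r1 [F1 L1]].
    destruct (fsum_incl a N2 (lunion_NoDup l1 l2) (lunion_incl_r l1 l2) Er) as [r2 [F2 L2]].
    rewrite E1 in F1; rewrite E2 in F2. inversion F1; inversion F2; subst. split; auto.
Qed.

Lemma Sum_alldef {I : Type} {a : I -> A} {v} : Sum a v -> AllDef a.
Proof. intros H; apply Sum_iff in H; tauto. Qed.

Lemma Sum_ub {I : Type} {a : I -> A} {v} l r : Sum a v -> NoDup l -> fsum a l = Some r -> le r v.
Proof. intros H N E. apply Sum_iff in H. destruct H as [_ [H _]]. apply H. exists l; auto. Qed.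

Lemma Sum_lub {I : Type} {a : I -> A} {v} w : Sum a v -> (forall l r, NoDup l -> fsum a l = Some r -> le r w) -> le v w.
Proof.
  intros H B. apply Sum_iff in H. destruct H as [_ [_ H]]. apply H.
  intros d (l & N & E). exact (B l d N E).
Qed.

Lemma Sum_uniq {I : Type} {a : I -> A} {v w} : Sum a v -> Sum a w -> v = w.
Proof. intros H1 H2. apply Sum_iff in H1, H2. eapply is_sup_uniq; [apply H1|apply H2]. Qed.

Lemma Sum_bounded {I : Type} (a : I -> A) w : (forall l, NoDup l -> exists r, fsum a l = Some r /\ le r w) ->
  exists v, Sum a v /\ le v w.
Proof.
  intros H.
  assert (AD : AllDef a) by (intros l N; destruct (H l N) as [r [E _]]; eauto).
  destruct (dcpo A (FinS_directed AD)) as [v Hv].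
  exists v; split. apply Sum_iff; auto.
  apply Hv. intros d (l & N & E). destruct (H l N) as [r [E' L]]. rewrite E in E'; inversion E'; subst; auto.
Qed.

Lemma Sum_le_pt {I : Type} {a b : I -> A} {w} : Sum b w -> (forall i, le (a i) (b i)) -> exists v, Sum a v /\ le v w.
Proof.
  intros H L. apply Sum_bounded. intros l N.
  destruct (Sum_alldef H l N) as [rb Eb].
  destruct (fsum_mono (fun i _ => L i) Eb) as [r [E Lr]].
  exists r; split; auto. eapply le_trans; [exact Lr|]. eapply Sum_ub; eauto.
Qed.

Lemma Sum_mono {I : Type} {a b : I -> A} {v w} : Sum a v -> Sum b w -> (forall i, le (a i) (b i)) -> le v w.
Proof.
  intros Ha Hb L. destruct (Sum_le_pt Hb L) as [v' [H' L']]. rewrite (Sum_uniq Ha H'); auto.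
Qed.

Lemma Sum_term {I : Type} {a : I -> A} {v} i : Sum a v -> le (a i) v.
Proof.
  intros H. apply (Sum_ub [i] (a i) H). constructor; auto; constructor.
  simpl. apply add_0r.
Qed.

Lemma fsum_single {I : Type} (a : I -> A) i0 : (forall i, i <> i0 -> a i = zero) ->
  forall l, NoDup l -> (fsum a l = Some (a i0) /\ In i0 l) \/ (fsum a l = Some zero /\ ~ In i0 l).
Proof.
  intros Z l N. induction N as [|x l Nx N IH].
  - right; simpl; auto.
  - rewrite fsum_cons. destruct (cdec x i0) as [->|ne].
    + destruct IH as [[_ H]|[E H]]; [tauto|].
      left. rewrite E, oadd_SS, add_0r. simpl; auto.
    + rewrite (Z x ne). rewrite oadd_0l. simpl.
      destruct IH as [[E H]|[E H]]; [left|right]; split; auto.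
      intros [H'|H']; auto.
Qed.

Lemma Sum_single {I : Type} (a : I -> A) i0 : (forall i, i <> i0 -> a i = zero) -> Sum a (a i0).
Proof.
  intros Z. apply Sum_iff. split.
  - intros l N. destruct (fsum_single a i0 Z l N) as [[E _]|[E _]]; eauto.
  - split.
    + intros d (l & N & E). destruct (fsum_single a i0 Z l N) as [[E' _]|[E' _]]; rewrite E' in E; inversion E; subst.
      apply le_refl. apply le_0.
    + intros w H. apply H. exists [i0]. split. constructor; auto; constructor.
      simpl. apply add_0r.
Qed.


Lemma Sum_zero {I : Type} (a : I -> A) : (forall i, a i = zero) -> Sum a zero.
Proof.
  intros Z. apply Sum_iff. assert (E : forall l, fsum a l = Some zero).
  { intros l. rewrite (fsum_ext a (fun _ => zero)); auto using fsum_zero. }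
  split.
  - intros l _; eauto.
  - split.
    + intros d (l & _ & E'). rewrite E in E'. inversion E'; apply le_refl.
    + intros w H. apply le_0.
Qed.

Lemma Sum_nonzero {I : Type} {a : I -> A} {v} : Sum a v -> v <> zero -> exists i, a i <> zero.
Proof.
  intros H Hv. apply NNPP; intros C. apply Hv.
  apply (Sum_uniq H). apply Sum_zero. intros i. apply NNPP; intros C'. apply C; eauto.
Qed.

Lemma Sum_mul_l {I : Type} {a : I -> A} {v} u : Sum a v -> Sum (fun i => mul u (a i)) (mul u v).
Proof.
  intros H. apply Sum_iff in H. destruct H as [AD S].
  pose proof (mul_contr A u (FinS_directed AD) S) as M.
  apply Sum_iff. split.
  - intros l N. destruct (AD l N) as [r E]. exists (mul u r). apply fsum_mul_l; auto.
  - revert M; apply is_sup_ext. intros x; split.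
    + intros (y & (l & N & E) & ->). exists l; split; auto. apply fsum_mul_l; auto.
    + intros (l & N & E). destruct (AD l N) as [r E']. exists r; split. exists l; auto.
      rewrite (fsum_mul_l a u E') in E. inversion E; auto.
Qed.

Lemma Sum_mul_r {I : Type} {a : I -> A} {v} u : Sum a v -> Sum (fun i => mul (a i) u) (mul v u).
Proof.
  intros H. apply Sum_iff in H. destruct H as [AD S].
  pose proof (mul_contl A u (FinS_directed AD) S) as M.
  apply Sum_iff. split.
  - intros l N. destruct (AD l N) as [r E]. exists (mul r u). apply fsum_mul_r; auto.
  - revert M; apply is_sup_ext. intros x; split.
    + intros (y & (l & N & E) & ->). exists l; split; auto. apply fsum_mul_r; auto.
    + intros (l & N & E). destruct (AD l N) as [r E']. exists r; split. exists l; auto.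
      rewrite (fsum_mul_r a u E') in E. inversion E; auto.
Qed.

Lemma cont_defined (D : A -> Prop) d u : directed add D -> is_sup add D d ->
  (forall x, D x -> exists r, add u x = Some r) -> exists r, add u d = Some r.
Proof.
  intros Dir S H.
  set (D' := fun w => exists x, D x /\ add u x = Some w).
  assert (Dir' : directed add D').
  { destruct Dir as [[x0 Hx0] Dir]. split.
    - destruct (H x0 Hx0) as [r Er]. exists r, x0; auto.
    - intros w1 w2 (x1 & D1 & E1) (x2 & D2 & E2).
      destruct (Dir x1 x2 D1 D2) as (c & Dc & L1 & L2).
      destruct (H c Dc) as [w3 E3]. exists w3. split. exists c; auto.
      split; [exact (add_mono_eq (le_refl u) L1 E3 E1)|exact (add_mono_eq (le_refl u) L2 E3 E2)]. }
  destruct (dcpo A Dir') as [v Hv]. exists v.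
  apply (add_cont A u Dir S v). split; auto.
Qed.

Lemma cont_lub (D : A -> Prop) d u r w : directed add D -> is_sup add D d -> add u d = Some r ->
  (forall x r', D x -> add u x = Some r' -> le r' w) -> le r w.
Proof.
  intros Dir S E H. apply (add_cont A u Dir S r) in E. destruct E as [_ [_ E]].
  apply E. intros d' (x & Dx & Ex). exact (H x d' Dx Ex).
Qed.

Lemma Sum_add {I : Type} {a b c : I -> A} {v w z} : Sum a v -> Sum b w -> add v w = Some z ->
  (forall i, add (a i) (b i) = Some (c i)) -> Sum c z.
Proof.
  intros Ha Hb E P.
  assert (Fc : forall l, NoDup l -> exists r, fsum c l = Some r /\ le r z).
  { intros l N. rewrite (fsum_add a b c l P).
    destruct (Sum_alldef Ha l N) as [ra Ea]. destruct (Sum_alldef Hb l N) as [rb Eb].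
    rewrite Ea, Eb, oadd_SS. eapply add_mono; eauto; eapply Sum_ub; eauto. }
  apply Sum_iff. split; [|split].
  - intros l N; destruct (Fc l N) as [r [Er _]]; eauto.
  - intros d (l & N & Ed). destruct (Fc l N) as [r [Er L]]. rewrite Er in Ed; inversion Ed; subst; auto.
  - intros w' Hw'.
    pose proof Ha as Ha'. apply Sum_iff in Ha'. destruct Ha' as [ADa Sa].
    pose proof Hb as Hb'. apply Sum_iff in Hb'. destruct Hb' as [ADb Sb].
    rewrite add_comm in E.
    apply (cont_lub _ _ _ _ _ (FinS_directed ADa) Sa E).
    intros x r' (l1 & N1 & E1) Ex. rewrite add_comm in Ex.
    apply (cont_lub _ _ _ _ _ (FinS_directed ADb) Sb Ex).
    intros y r'' (l2 & N2 & E2) Ey.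
    destruct (fsum_incl a N1 (lunion_NoDup l1 l2) (lunion_incl_l l1 l2) (proj2_sig (constructive_indefinite_description _ (ADa _ (lunion_NoDup l1 l2))))) as [x' [F1 L1]].
    rewrite E1 in F1; inversion F1; subst x'.
    destruct (fsum_incl b N2 (lunion_NoDup l1 l2) (lunion_incl_r l1 l2) (proj2_sig (constructive_indefinite_description _ (ADb _ (lunion_NoDup l1 l2))))) as [y' [F2 L2]].
    rewrite E2 in F2; inversion F2; subst y'.
    set (xa := proj1_sig (constructive_indefinite_description _ (ADa _ (lunion_NoDup l1 l2)))) in *.
    set (yb := proj1_sig (constructive_indefinite_description _ (ADb _ (lunion_NoDup l1 l2)))) in *.
    assert (Ec : fsum c (lunion l1 l2) = add xa yb).
    { rewrite (fsum_add a b c _ P). 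
      rewrite (proj2_sig (constructive_indefinite_description _ (ADa _ (lunion_NoDup l1 l2)))).
      rewrite (proj2_sig (constructive_indefinite_description _ (ADb _ (lunion_NoDup l1 l2)))). reflexivity. }
    destruct (add xa yb) as [rc|] eqn:Erc.
    + eapply le_trans. eapply (add_mono_eq L1 L2 Erc Ey). apply Hw'. exists (lunion l1 l2); split; auto using lunion_NoDup.
    + destruct (Fc _ (lunion_NoDup l1 l2)) as [rr [Err _]]. congruence.
Qed.

Lemma Sum_add_rev {I : Type} {a b c : I -> A} {v w z} : Sum a v -> Sum b w -> Sum c z ->
  (forall i, add (a i) (b i) = Some (c i)) -> add v w = Some z.
Proof.
  intros Ha Hb Hc P.
  pose proof Ha as Ha'. apply Sum_iff in Ha'. destruct Ha' as [ADa Sa].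
  pose proof Hb as Hb'. apply Sum_iff in Hb'. destruct Hb' as [ADb Sb].
  assert (H1 : forall x, FinS a x -> exists r, add x w = Some r).
  { intros x (l1 & N1 & E1).
    apply (cont_defined _ _ _ (FinS_directed ADb) Sb).
    intros y (l2 & N2 & E2).
    destruct (ADa _ (lunion_NoDup l1 l2)) as [xa Exa].
    destruct (ADb _ (lunion_NoDup l1 l2)) as [yb Eyb].
    destruct (fsum_incl a N1 (lunion_NoDup l1 l2) (lunion_incl_l l1 l2) Exa) as [x' [F1 L1]].
    destruct (fsum_incl b N2 (lunion_NoDup l1 l2) (lunion_incl_r l1 l2) Eyb) as [y' [F2 L2]].
    rewrite E1 in F1; inversion F1; subst x'. rewrite E2 in F2; inversion F2; subst y'.
    destruct (Sum_alldef Hc _ (lunion_NoDup l1 l2)) as [rc Erc].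
    rewrite (fsum_add a b c _ P), Exa, Eyb, oadd_SS in Erc.
    destruct (add_mono L1 L2 Erc) as [r [Er _]]. exists r. auto. }
  assert (H2 : exists r, add w v = Some r).
  { apply (cont_defined _ _ _ (FinS_directed ADa) Sa).
    intros x Hx. destruct (H1 x Hx) as [r Er]. exists r; rewrite add_comm; auto. }
  destruct H2 as [z' Ez']. rewrite add_comm in Ez'.
  rewrite (Sum_uniq Hc (Sum_add Ha Hb Ez' P)). auto.
Qed.
End Sums.

Section Fub.
Context {A : PSR}.

Definition oget (o : option A) : A := match o with Some x => x | None => zero end.

Lemma Sum_fin {I J : Type} (a : I -> J -> A) (b : I -> A) : (forall i, Sum (a i) (b i)) ->
  forall li r, fsum b li = Some r ->
  exists c : J -> A, (forall j, fsum (fun i => a i j) li = Some (c j)) /\ Sum c r.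
Proof.
  intros H li. induction li as [|i l IH]; intros r E.
  - simpl in E. inversion E; subst. exists (fun _ => zero). split; auto.
    apply Sum_zero; auto.
  - rewrite fsum_cons in E. destruct (fsum b l) as [r1|] eqn:E1; [|rewrite oadd_None_r in E; discriminate].
    destruct (IH r1 eq_refl) as [c1 [Ec1 S1]].
    assert (D : forall j, add (a i j) (c1 j) = Some (oget (add (a i j) (c1 j)))).
    { intros j. rewrite oadd_SS in E.
      destruct (add_mono (Sum_term j (H i)) (Sum_term j S1) E) as [x [Ex _]]. rewrite Ex; auto. }
    exists (fun j => oget (add (a i j) (c1 j))). split.
    + intros j. rewrite fsum_cons, Ec1, oadd_SS. apply D.
    + rewrite oadd_SS in E. exact (Sum_add (H i) S1 E D).
Qed.

Lemma Fubini {I J : Type} (a : I -> J -> A) (b : I -> A) v : (forall i, Sum (a i) (b i)) -> Sum b v ->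
  exists c : J -> A, (forall j, Sum (fun i => a i j) (c j)) /\ Sum c v.
Proof.
  intros Ha Hb.
  assert (S1 : forall j, exists cj, Sum (fun i => a i j) cj /\ le cj v).
  { intros j. apply Sum_bounded. intros li N.
    destruct (Sum_alldef Hb li N) as [rb Eb].
    destruct (@fsum_mono A I (fun i => a i j) b li rb (fun i _ => Sum_term j (Ha i)) Eb) as [r [Er Lr]].
    exists r; split; auto. eapply le_trans; [exact Lr|]. exact (Sum_ub li rb Hb N Eb). }
  destruct (choice_fun _ S1) as [c Hc].
  assert (G : forall lj li, NoDup lj -> NoDup li ->
     exists r, ofsum (fun j => ofsum (fun i => Some (a i j)) li) lj = Some r /\ le r v).
  { intros lj li Nj Ni. rewrite <- ofsum_swap.
    rewrite (ofsum_ext _ (fun i => Some (oget (fsum (a i) lj)))).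
    2:{ intros i _. rewrite <- fsum_ofsum. destruct (Sum_alldef (Ha i) lj Nj) as [s Es]. rewrite Es; auto. }
    rewrite <- fsum_ofsum.
    destruct (Sum_alldef Hb li Ni) as [rb Eb].
    assert (L : forall i, In i li -> le (oget (fsum (a i) lj)) (b i)).
    { intros i _. destruct (Sum_alldef (Ha i) lj Nj) as [s Es]. rewrite Es. exact (Sum_ub lj s (Ha i) Nj Es). }
    destruct (fsum_mono L Eb) as [r [Er Lr]]. exists r; split; auto.
    eapply le_trans; [exact Lr|]. exact (Sum_ub li rb Hb Ni Eb). }
  assert (S2 : forall lj, NoDup lj -> exists r, fsum c lj = Some r /\ le r v).
  { intros lj Nj. induction Nj as [|j lj' Nj' Nj IH].
    - exists zero; split; auto using le_0.
    - destruct IH as [s' [Es' Ls']].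
      destruct (Sum_fin (fun j i => a i j) c (fun j => proj1 (Hc j)) lj' s' Es') as [c' [Ec' Sc']].
      assert (Dd : forall i, add (a i j) (c' i) = Some (oget (add (a i j) (c' i)))).
      { intros i. destruct (Sum_alldef (Ha i) (j :: lj') (NoDup_cons _ Nj' Nj)) as [x Ex].
        rewrite fsum_cons, Ec', oadd_SS in Ex. rewrite Ex; auto. }
      destruct (Sum_bounded (fun i => oget (add (a i j) (c' i))) v) as [z [Sz Lz]].
      { intros li Ni. destruct (G (j :: lj') li (NoDup_cons _ Nj' Nj) Ni) as [r [Er Lr]].
        exists r; split; auto. rewrite <- Er, ofsum_swap, fsum_ofsum. apply ofsum_ext.
        intros i _. rewrite <- Dd. simpl. rewrite <- fsum_ofsum, Ec'. reflexivity. }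
      exists z; split; auto. rewrite fsum_cons, Es', oadd_SS.
      exact (Sum_add_rev (proj1 (Hc j)) Sc' Sz Dd). }
  destruct (Sum_bounded c v S2) as [v' [Sv' Lv']].
  exists c; split. intros j; apply Hc.
  replace v with v'; auto. apply le_antisym; auto.
  apply (Sum_lub v' Hb). intros li rb Ni Eb.
  destruct (Sum_fin a b Ha li rb Eb) as [r [Er Sr]].
  apply (Sum_mono Sr Sv'). intros j. exact (Sum_ub li (r j) (proj1 (Hc j)) Ni (Er j)).
Qed.

Lemma HasSum_Sum {I : Type} (P : I -> Prop) (a : I -> A) v : (forall i, ~ P i -> a i = zero) ->
  (HasSum P a v <-> Sum a v).
Proof.
  intros Z. unfold Sum, HasSum. split.
  - intros [H1 H2]. split.
    + intros l N _. rewrite <- (fsum_cfilter a P l (fun i _ => Z i)).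
      apply H1. apply cfilter_NoDup; auto. apply Forall_forall. intros x Hx. apply cfilter_In in Hx; tauto.
    + revert H2; apply is_sup_ext. intros x; split.
      * intros (l & N & _ & E); exists l; auto using Forall_True.
      * intros (l & N & _ & E). exists (cfilter P l). split; [apply cfilter_NoDup; auto|split].
        apply Forall_forall. intros y Hy. apply cfilter_In in Hy; tauto.
        rewrite fsum_cfilter; auto.
  - intros [H1 H2]. split.
    + intros l N _. apply H1; auto using Forall_True.
    + revert H2; apply is_sup_ext. intros x; split.
      * intros (l & N & _ & E). exists (cfilter P l). split; [apply cfilter_NoDup; auto|split].
        apply Forall_forall. intros y Hy. apply cfilter_In in Hy; tauto.
        rewrite fsum_cfilter; auto.
      * intros (l & N & _ & E); exists l; auto using Forall_True.
Qed.

Lemma Sum_transfer {I J : Type} (a : I -> A) (b : J -> A) v :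
  (forall l, NoDup l -> exists l', NoDup l' /\ fsum b l' = fsum a l) ->
  (forall l', NoDup l' -> exists l, NoDup l /\ fsum a l = fsum b l') ->
  Sum a v -> Sum b v.
Proof.
  intros T1 T2 H. apply Sum_iff in H. destruct H as [AD S]. apply Sum_iff. split.
  - intros l' N. destruct (T2 l' N) as [l [Nl E]]. rewrite <- E. apply AD; auto.
  - revert S; apply is_sup_ext. intros x; split.
    + intros (l & N & E). destruct (T1 l N) as [l' [N' E']]. exists l'; split; congruence.
    + intros (l' & N & E). destruct (T2 l' N) as [l [N' E']]. exists l; split; congruence.
Qed.

Lemma Sum_reindex {I J : Type} (a : I -> A) (g : J -> I) (h : I -> J) v :
  (forall x y, g x = g y -> x = y) -> (forall i, a i <> zero -> g (h i) = i) ->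
  Sum a v -> Sum (fun j => a (g j)) v.
Proof.
  intros Inj Gh. apply Sum_transfer.
  - intros l N. set (l1 := cfilter (fun i => a i <> zero) l).
    assert (E1 : map g (map h l1) = l1).
    { rewrite map_map. rewrite <- (map_id l1) at 2. apply map_ext_in.
      intros i Hi. apply cfilter_In in Hi. apply Gh; tauto. }
    exists (map h l1). split.
    + apply (NoDup_map_inv g). rewrite E1. apply cfilter_NoDup; auto.
    + rewrite <- (fsum_map a g), E1. unfold l1. apply fsum_cfilter.
      intros i _ Hi. apply NNPP; auto.
  - intros l' N. exists (map g l'). split.
    + apply NoDup_map_NoDup_ForallPairs; auto. intros x y _ _; apply Inj.
    + apply fsum_map.
Qed.

Lemma Sum_split0 (a : nat -> A) z : Sum a z -> exists w, Sum (fun n => a (S n)) w /\ add (a 0) w = Some z.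
Proof.
  intros H.
  set (a1 := fun n => match n with 0 => a 0 | S _ => zero end).
  set (a2 := fun n => match n with 0 => zero | S _ => a n end).
  assert (S1 : Sum a1 (a 0)).
  { change (a 0) with (a1 0). apply Sum_single. intros [|i] Hi; [congruence|reflexivity]. }
  destruct (@Sum_le_pt A nat a2 a z H) as [w [S2 _]].
  { intros [|i]; simpl. apply le_0. apply le_refl. }
  exists w. split.
  - apply (Sum_reindex a2 S pred w); auto.
    intros [|i] Hi; simpl in *; congruence.
  - apply (Sum_add_rev S1 S2 H). intros [|i]; simpl. apply add_0r. apply add_0l.
Qed.

End Fub.

Section W.
Context {A : PSR}.

Definition KW {X Y : Type} (f : X -> Y -> A) := forall x, isW (f x).

Lemma not_supp {X : Type} (m : X -> A) x : ~ supp m x -> m x = zero.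
Proof. unfold supp; intros H; apply NNPP; auto. Qed.

Lemma isW_Sum {X : Type} {m : X -> A} : isW m -> exists v, Sum m v.
Proof.
  intros [_ [v H]]. exists v. apply (HasSum_Sum (supp m)); auto. apply not_supp.
Qed.

Lemma isW_of {X : Type} (m : X -> A) v : countable (supp m) -> Sum m v -> isW m.
Proof.
  intros C S. split; auto. exists v. apply (HasSum_Sum (supp m)); auto. apply not_supp.
Qed.

Lemma countable_mono {X : Type} (P Q : X -> Prop) : (forall x, P x -> Q x) -> countable Q -> countable P.
Proof. intros H [f Hf]. exists f. intros x Px. apply Hf, H, Px. Qed.

Lemma isW_le {X : Type} (a b : X -> A) : isW b -> (forall y, le (a y) (b y)) -> isW a.
Proof.
  intros Hb L. destruct (isW_Sum Hb) as [w Sw].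
  destruct (Sum_le_pt Sw L) as [v [Sv _]].
  apply (isW_of a v); auto.
  apply (countable_mono _ (supp b)); [|apply Hb].
  intros x Hx Hbx. apply Hx. apply le_zero. rewrite <- Hbx. apply L.
Qed.

Lemma top_ex : exists t : A, forall u, le u t.
Proof. apply has_top. Qed.

Lemma isW_mulr {X : Type} (m : X -> A) (h : X -> A) : isW m -> isW (fun y => mul (m y) (h y)).
Proof.
  intros Hm. destruct top_ex as [t Ht]. destruct (isW_Sum Hm) as [v Sv].
  apply (isW_le _ (fun y => mul (m y) t)).
  - apply (isW_of _ (mul v t)).
    + apply (countable_mono _ (supp m)); [|apply Hm]. intros x Hx C. apply Hx. rewrite C. apply mul_0l.
    + apply Sum_mul_r; auto.
  - intros y. apply mul_mono_l, Ht.
Qed.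

Lemma isW_mull {X : Type} (m : X -> A) (h : X -> A) : isW m -> isW (fun y => mul (h y) (m y)).
Proof.
  intros Hm. destruct top_ex as [t Ht]. destruct (isW_Sum Hm) as [v Sv].
  apply (isW_le _ (fun y => mul t (m y))).
  - apply (isW_of _ (mul t v)).
    + apply (countable_mono _ (supp m)); [|apply Hm]. intros x Hx C. apply Hx. rewrite C. apply mul_0r.
    + apply Sum_mul_l; auto.
  - intros y. apply mul_mono_r, Ht.
Qed.

Lemma isW_lscale {X : Type} (u : A) (m : X -> A) : isW m -> isW (lscale u m).
Proof. apply (isW_mull m (fun _ => u)). Qed.

Lemma isW_rscale {X : Type} (m : X -> A) (u : A) : isW m -> isW (rscale m u).
Proof. apply (isW_mulr m (fun _ => u)). Qed.

Lemma eta_same {X : Type} (x : X) : @eta A X x x = one.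
Proof. unfold eta. destruct (excluded_middle_informative (x = x)); congruence. Qed.

Lemma eta_diff {X : Type} (x y : X) : x <> y -> @eta A X x y = zero.
Proof. unfold eta. destruct (excluded_middle_informative (x = y)); congruence. Qed.

Lemma eta_supp {X : Type} (x y : X) : supp (@eta A X x) y -> y = x.
Proof. intros H. destruct (cdec x y); auto. exfalso; apply H, eta_diff; auto. Qed.

Lemma isW_eta {X : Type} (x : X) : isW (@eta A X x).
Proof.
  apply (isW_of _ (eta x x)).
  - exists (fun _ => Some x). intros y Hy. exists 0. rewrite (eta_supp _ _ Hy); auto.
  - apply Sum_single. intros i Hi. apply eta_diff; auto.
Qed.

Lemma Bind_iff {X Y : Type} (f : X -> Y -> A) m m' : Bind f m m' <->
  isW m /\ KW f /\ isW m' /\ forall y, Sum (fun x => mul (m x) (f x y)) (m' y).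
Proof.
  assert (Z : forall y x, ~ supp m x -> mul (m x) (f x y) = zero)
    by (intros y x Hx; rewrite (not_supp m x Hx); apply mul_0l).
  unfold Bind, KW. split; intros (H1 & H2 & H3 & H4); (split; [auto|split; [auto|split; [auto|]]]); intros y.
  - apply (HasSum_Sum (supp m)); auto.
  - apply (HasSum_Sum (supp m)); auto.
Qed.

Lemma Bind_uniq {X Y : Type} {f : X -> Y -> A} {m m1 m2} : Bind f m m1 -> Bind f m m2 -> m1 = m2.
Proof.
  intros H1 H2. apply Bind_iff in H1, H2. extensionality y.
  apply (Sum_uniq (proj2 (proj2 (proj2 H1)) y) (proj2 (proj2 (proj2 H2)) y)).
Qed.

Lemma Bind_exists {X Y : Type} (f : X -> Y -> A) m : isW m -> KW f -> exists m', Bind f m m'.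
Proof.
  intros Hm Hf. destruct top_ex as [t Ht]. destruct (isW_Sum Hm) as [v Sv].
  assert (E1 : forall y, exists z, Sum (fun x => mul (m x) (f x y)) z).
  { intros y. destruct (@Sum_le_pt A X (fun x => mul (m x) (f x y)) (fun x => mul (m x) t) (mul v t)) as [z [Sz _]].
    apply Sum_mul_r; auto. intros x; apply mul_mono_l, Ht. eauto. }
  destruct (choice_fun _ E1) as [m' Hm'].
  exists m'. apply Bind_iff. split; [auto|split; [auto|split; [|exact Hm']]].
  assert (Fm : forall x, exists w, Sum (f x) w) by (intros x; apply isW_Sum, Hf).
  destruct (choice_fun _ Fm) as [mass Hmass].
  destruct (@Sum_le_pt A X (fun x => mul (m x) (mass x)) (fun x => mul (m x) t) (mul v t)) as [z [Sz _]].
  { apply Sum_mul_r; auto. } { intros x; apply mul_mono_l, Ht. }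
  destruct (Fubini (fun x y => mul (m x) (f x y)) _ z (fun x => Sum_mul_l (m x) (Hmass x)) Sz) as [c [Hc Sc]].
  assert (Ec : c = m') by (extensionality y; exact (Sum_uniq (Hc y) (Hm' y))).
  subst c. apply (isW_of _ z); auto.
  destruct Hm as [[em Hem] _].
  assert (Cf : forall x, exists en : nat -> option Y, forall y, supp (f x) y -> exists n, en n = Some y)
    by (intros x; apply (Hf x)).
  destruct (choice_fun _ Cf) as [ef Hef].
  exists (fun n => let '(i, j) := Cantor.of_nat n in match em i with Some x => ef x j | None => None end).
  intros y Hy. destruct (Sum_nonzero (Hm' y) Hy) as [x Hx].
  assert (Hmx : supp m x) by (intros C; apply Hx; rewrite C; apply mul_0l).
  assert (Hfx : supp (f x) y) by (intros C; apply Hx; rewrite C; apply mul_0r).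
  destruct (Hem x Hmx) as [i Ei]. destruct (Hef x y Hfx) as [j Ej].
  exists (Cantor.to_nat (i, j)). rewrite Cantor.cancel_of_to, Ei; auto.
Qed.

Definition bnd {X Y : Type} (f : X -> Y -> A) (m : X -> A) : Y -> A :=
  epsilon (inhabits (fun _ => zero)) (fun m' => Bind f m m').

Lemma bnd_spec {X Y : Type} (f : X -> Y -> A) m : isW m -> KW f -> Bind f m (bnd f m).
Proof.
  intros Hm Hf. unfold bnd. apply epsilon_spec. apply Bind_exists; auto.
Qed.

Lemma bnd_eq {X Y : Type} {f : X -> Y -> A} {m m'} : Bind f m m' -> bnd f m = m'.
Proof.
  intros H. apply Bind_iff in H as H'. destruct H' as (Hm & Hf & _).
  exact (Bind_uniq (bnd_spec f m Hm Hf) H).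
Qed.

Lemma Bind_isW_l {X Y : Type} {f : X -> Y -> A} {m m'} : Bind f m m' -> isW m.
Proof. intros H; exact (proj1 H). Qed.
Lemma Bind_isW_r {X Y : Type} {f : X -> Y -> A} {m m'} : Bind f m m' -> isW m'.
Proof. intros H; exact (proj1 (proj2 (proj2 H))). Qed.
Lemma Bind_KW {X Y : Type} {f : X -> Y -> A} {m m'} : Bind f m m' -> KW f.
Proof. intros H; exact (proj1 (proj2 H)). Qed.

Lemma bnd_isW {X Y : Type} (f : X -> Y -> A) m : isW m -> KW f -> isW (bnd f m).
Proof. intros; eapply Bind_isW_r, bnd_spec; eauto. Qed.

Lemma Bind_assoc {X Y Z : Type} (f1 : X -> Y -> A) (f2 : Y -> Z -> A) (h : X -> Z -> A) m m1 m2 :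
  Bind f1 m m1 -> Bind f2 m1 m2 -> (forall s, Bind f2 (f1 s) (h s)) -> Bind h m m2.
Proof.
  intros B1 B2 Bh. apply Bind_iff in B1, B2.
  destruct B1 as (Hm & Hf1 & Hm1 & S1). destruct B2 as (_ & Hf2 & Hm2 & S2).
  apply Bind_iff. split; [auto|split; [auto|split; [auto|]]].
  - intros s. exact (Bind_isW_r (Bh s)).
  - intros z.
    assert (R : forall y, Sum (fun x => mul (mul (m x) (f1 x y)) (f2 y z)) (mul (m1 y) (f2 y z)))
      by (intros y; apply Sum_mul_r, S1).
    destruct (Fubini _ _ _ R (S2 z)) as [c [Hc Sc]].
    replace (fun x => mul (m x) (h x z)) with c; auto.
    extensionality x. apply (Sum_uniq (Hc x)).
    pose proof (Bh x) as Bx. apply Bind_iff in Bx. destruct Bx as (_ & _ & _ & Bx).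
    replace (fun i => mul (mul (m x) (f1 x i)) (f2 i z)) with (fun i => mul (m x) (mul (f1 x i) (f2 i z)))
      by (extensionality i; apply mul_assoc).
    apply Sum_mul_l. apply Bx.
Qed.
End W.

Section W2.
Context {A : PSR}.

Lemma Sum_single' {I : Type} (a : I -> A) i0 v : (forall i, i <> i0 -> a i = zero) -> a i0 = v -> Sum a v.
Proof. intros H E; subst; apply Sum_single; auto. Qed.

Lemma Bind_scale {X Y : Type} {f : X -> Y -> A} {m m'} u : Bind f m m' -> Bind f (lscale u m) (lscale u m').
Proof.
  intros B. apply Bind_iff in B. destruct B as (Hm & Hf & Hm' & S).
  apply Bind_iff. split; [apply isW_lscale; auto|split; [auto|split; [apply isW_lscale; auto|]]].
  intros y. unfold lscale.
  replace (fun x => mul (mul u (m x)) (f x y)) with (fun x => mul u (mul (m x) (f x y)))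
    by (extensionality x; apply mul_assoc).
  apply Sum_mul_l, S.
Qed.

Lemma Bind_plus {X Y : Type} {f1 f2 f : X -> Y -> A} {m n1 n2 n} :
  Bind f1 m n1 -> Bind f2 m n2 -> Bind f m n ->
  (forall s y, add (f1 s y) (f2 s y) = Some (f s y)) -> WPlus n1 n2 n.
Proof.
  intros B1 B2 B P. apply Bind_iff in B1, B2, B.
  intros y. apply (Sum_add_rev (proj2 (proj2 (proj2 B1)) y) (proj2 (proj2 (proj2 B2)) y) (proj2 (proj2 (proj2 B)) y)).
  intros x. apply mul_addr, P.
Qed.

Lemma Bind_sum {X Y T : Type} {f : X -> Y -> A} {ms : T -> X -> A} {m n n'} :
  WSum ms m -> (forall t, Bind f (ms t) (n t)) -> Bind f m n' -> WSum n n'.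
Proof.
  intros [Hm Sm] Bn B. apply Bind_iff in B. destruct B as (_ & Hf & Hn' & S).
  split; auto. intros y.
  assert (R : forall x, Sum (fun t => mul (ms t x) (f x y)) (mul (m x) (f x y)))
    by (intros x; apply Sum_mul_r, Sm).
  destruct (Fubini _ _ _ R (S y)) as [c [Hc Sc]].
  replace (fun t => n t y) with c; auto.
  extensionality t. apply (Sum_uniq (Hc t)).
  pose proof (Bn t) as Bt. apply Bind_iff in Bt. apply Bt.
Qed.

Lemma Bind_eta_r {X : Type} (m : X -> A) : isW m -> Bind (fun s => eta s) m m.
Proof.
  intros Hm. apply Bind_iff. split; [auto|split; [intros x; apply isW_eta|split; [auto|]]].
  intros y. apply (Sum_single' _ y). intros i Hi. rewrite eta_diff; auto. apply mul_0r.
  rewrite eta_same, mul_1r; auto.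
Qed.

Lemma Bind_eta_l {X Y : Type} (f : X -> Y -> A) s : KW f -> Bind f (eta s) (f s).
Proof.
  intros Hf. apply Bind_iff. split; [apply isW_eta|split; [auto|split; [auto|]]].
  intros y. apply (Sum_single' _ s). intros i Hi. rewrite eta_diff; auto. apply mul_0l.
  rewrite eta_same, mul_1l; auto.
Qed.

Lemma Bind_assume {X : Type} (u : X -> A) (m : X -> A) : isW m ->
  Bind (fun s => lscale (u s) (eta s)) m (fun y => mul (m y) (u y)).
Proof.
  intros Hm. apply Bind_iff. split; [auto|split; [intros x; apply isW_lscale, isW_eta|split; [apply isW_mulr; auto|]]].
  intros y. unfold lscale.
  apply (Sum_single' _ y). intros i Hi. rewrite eta_diff; auto. rewrite !mul_0r; auto.
  rewrite eta_same, mul_1r; auto.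
Qed.

Lemma Bind_lscale_eta {X Y : Type} (f : X -> Y -> A) u s : KW f -> Bind f (lscale u (eta s)) (lscale u (f s)).
Proof. intros Hf. apply Bind_scale, Bind_eta_l; auto. Qed.

Lemma Bind_supp {X : Type} {f : X -> X -> A} {m m'} (B : X -> Prop) : Bind f m m' ->
  (forall x, supp m x -> B x) -> (forall x, B x -> forall y, supp (f x) y -> B y) ->
  forall y, supp m' y -> B y.
Proof.
  intros Bd Hm Hf y Hy. apply Bind_iff in Bd. destruct Bd as (_ & _ & _ & S).
  destruct (Sum_nonzero (S y) Hy) as [x Hx].
  apply (Hf x). apply Hm. intros C; apply Hx; rewrite C; apply mul_0l.
  intros C; apply Hx; rewrite C; apply mul_0r.
Qed.

Lemma Sum_supp {T X : Type} (ms : T -> X -> A) m (B : X -> Prop) :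
  (forall y, Sum (fun t => ms t y) (m y)) -> (forall t y, supp (ms t) y -> B y) -> forall y, supp m y -> B y.
Proof.
  intros S H y Hy. destruct (Sum_nonzero (S y) Hy) as [t Ht]. apply (H t); auto.
Qed.

End W2.

Lemma Sem_KW {A : PSR} (C : cmd A) f : Sem C f -> KW f.
Proof.
  induction 1; intros s.
  - apply isW_eta.
  - apply (Bind_isW_r (H1 s)).
  - apply (H1 s).
  - apply isW_lscale, isW_eta.
  - apply (proj1 H0).
  - apply isW_eta.
Qed.

Definition Akern {A : PSR} (e : gexp A) : kernel A := fun s => lscale (geval e s) (eta s).

Lemma KW_Akern {A : PSR} (e : gexp A) : KW (Akern e).
Proof. intros s; apply isW_lscale, isW_eta. Qed.

Section Kleene.
Context {A : PSR} (g : kernel A) (e e' : gexp A) (f : kernel A).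
Hypothesis Hg : KW g.
Hypothesis Hf : IsLfp g e e' f.

Definition Kk : kernel A := fun s => bnd g (Akern e s).

Fixpoint ch (m : state -> A) (n : nat) : state -> A :=
  match n with 0 => m | S n => ch (bnd Kk m) n end.

Definition q (m : state -> A) (n : nat) : state -> A := bnd (Akern e') (ch m n).

Lemma KW_Kk : KW Kk.
Proof. intros s. apply bnd_isW; auto. apply KW_Akern. Qed.

Lemma KW_f : KW f.
Proof. intros s; apply (proj1 Hf). Qed.

Lemma ch_isW n : forall m, isW m -> isW (ch m n).
Proof. induction n; simpl; intros m Hm; auto. apply IHn. apply bnd_isW; auto using KW_Kk. Qed.

Lemma q_isW n m : isW m -> isW (q m n).
Proof. intros Hm. apply bnd_isW. apply ch_isW; auto. apply KW_Akern. Qed.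

Lemma ch_S n : forall m, ch m (S n) = bnd Kk (ch m n).
Proof. induction n; intros m; simpl; auto. rewrite <- IHn. reflexivity. Qed.

Lemma Kk_eq s : Kk s = lscale (geval e s) (g s).
Proof. unfold Kk, Akern. apply bnd_eq. apply Bind_lscale_eta; auto. Qed.

Lemma fix_eq s y : add (mul (geval e s) (bnd f (g s) y)) (mul (geval e' s) (eta s y)) = Some (f s y).
Proof.
  destruct Hf as [_ [P _]]. destruct (P s) as [_ [k [Bk W]]].
  rewrite (bnd_eq Bk). apply W.
Qed.

Lemma step_a m : isW m -> WPlus (q m 0) (bnd f (bnd Kk m)) (bnd f m).
Proof.
  intros Hm.
  set (H := fun x => bnd f (Kk x)).
  assert (BH : Bind H m (bnd f (bnd Kk m))).
  { apply (Bind_assoc Kk f H m (bnd Kk m)).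
    - apply bnd_spec; auto using KW_Kk.
    - apply bnd_spec; auto using KW_f. apply bnd_isW; auto using KW_Kk.
    - intros s. apply bnd_spec; auto using KW_f, KW_Kk. }
  assert (EH : forall x, H x = lscale (geval e x) (bnd f (g x))).
  { intros x. unfold H. rewrite Kk_eq. apply bnd_eq. apply Bind_scale. apply bnd_spec; auto using KW_f. }
  apply (Bind_plus (f1 := Akern e') (f2 := H) (bnd_spec _ _ Hm (KW_Akern e')) BH (bnd_spec _ _ Hm KW_f)).
  intros s y. rewrite EH. unfold Akern, lscale. rewrite add_comm. apply fix_eq.
Qed.

Lemma step_b n : forall m, isW m -> forall y, exists r,
  fsum (fun k => q m k y) (seq 0 n) = Some r /\ add r (bnd f (ch m n) y) = Some (bnd f m y).
Proof.
  induction n; intros m Hm y.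
  - exists zero; split; auto. apply add_0l.
  - assert (Hm1 : isW (bnd Kk m)) by (apply bnd_isW; auto using KW_Kk).
    destruct (IHn _ Hm1 y) as [r1 [E1 A1]].
    pose proof (step_a m Hm y) as A0.
    change (seq 0 (S n)) with (0 :: seq 1 n). rewrite <- seq_shift, fsum_cons, fsum_map.
    change (fun j => q m (S j) y) with (fun j => q (bnd Kk m) j y). rewrite E1.
    assert (E : oadd (oadd (Some (q m 0 y)) (Some r1)) (Some (bnd f (ch (bnd Kk m) n) y)) = Some (bnd f m y)).
    { rewrite oadd_assoc, (oadd_SS r1), A1, oadd_SS. exact A0. }
    rewrite (oadd_SS (q m 0 y)) in E |- *.
    destruct (add (q m 0 y) r1) as [r|]; [|discriminate].
    exists r; split; auto.
Qed.

Lemma step_c m : isW m -> forall y, exists S, Sum (fun n => q m n y) S /\ le S (bnd f m y).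
Proof.
  intros Hm y. apply Sum_bounded. intros l N.
  set (Nn := S (list_max l)).
  assert (Inc : incl l (seq 0 Nn)).
  { intros x Hx. apply in_seq. split; [lia|]. unfold Nn.
    assert (x <= list_max l).
    { pose proof (proj1 (list_max_le l (list_max l)) (Nat.le_refl _)) as F. rewrite Forall_forall in F. auto. }
    lia. }
  destruct (step_b Nn m Hm y) as [r0 [E0 A0]].
  destruct (fsum_incl (fun k => q m k y) N (seq_NoDup Nn 0) Inc E0) as [r1 [E1 L1]].
  exists r1; split; auto. eapply le_trans; [exact L1|]. exact (le_addl A0).
Qed.

Definition F : kernel A := fun s y => epsilon (inhabits zero) (fun v => Sum (fun n => q (eta s) n y) v).

Lemma F_spec s y : Sum (fun n => q (eta s) n y) (F s y).
Proof.
  unfold F. apply epsilon_spec. destruct (step_c (eta s) (isW_eta s) y) as [S [H _]]. eauto.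
Qed.

Lemma F_le s y : le (F s y) (f s y).
Proof.
  destruct (step_c (eta s) (isW_eta s) y) as [S [H L]].
  rewrite (Sum_uniq (F_spec s y) H). rewrite (bnd_eq (Bind_eta_l f s KW_f)) in L. exact L.
Qed.

Lemma KW_F : KW F.
Proof. intros s. apply (isW_le _ (f s)); auto using KW_f. intros y; apply F_le. Qed.

Lemma step_e n : forall m, isW m -> Bind (fun s => ch (eta s) n) m (ch m n).
Proof.
  induction n; intros m Hm.
  - apply Bind_eta_r; auto.
  - simpl. apply (Bind_assoc Kk (fun s => ch (eta s) n) _ m (bnd Kk m)).
    + apply bnd_spec; auto using KW_Kk.
    + apply IHn. apply bnd_isW; auto using KW_Kk.
    + intros s. rewrite (bnd_eq (Bind_eta_l Kk s KW_Kk)). apply IHn. apply KW_Kk.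
Qed.

Lemma step_e' n m : isW m -> Bind (fun s => q (eta s) n) m (q m n).
Proof.
  intros Hm. apply (Bind_assoc (fun s => ch (eta s) n) (Akern e') _ m (ch m n)).
  - apply step_e; auto.
  - apply bnd_spec. apply ch_isW; auto. apply KW_Akern.
  - intros s. apply bnd_spec. apply ch_isW, isW_eta. apply KW_Akern.
Qed.

Lemma step_f m : isW m -> forall y, Sum (fun n => q m n y) (bnd F m y).
Proof.
  intros Hm y. pose proof (bnd_spec F m Hm KW_F) as B. apply Bind_iff in B.
  destruct B as (_ & _ & _ & B).
  assert (R : forall x, Sum (fun n => mul (m x) (q (eta x) n y)) (mul (m x) (F x y)))
    by (intros x; apply Sum_mul_l, F_spec).
  destruct (Fubini _ _ _ R (B y)) as [c [Hc Sc]].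
  replace (fun n => q m n y) with c; auto.
  extensionality n. apply (Sum_uniq (Hc n)).
  pose proof (step_e' n m Hm) as B'. apply Bind_iff in B'. apply B'.
Qed.

Lemma step_g : PhiRel g e e' F F.
Proof.
  intros s. split; [apply KW_F|].
  exists (bnd F (g s)). split; [apply bnd_spec; auto using KW_F|].
  intros y. destruct (Sum_split0 _ _ (F_spec s y)) as [w [Sw Aw]].
  assert (E0 : q (eta s) 0 y = mul (geval e' s) (eta s y)).
  { unfold q; simpl. rewrite (bnd_eq (Bind_eta_l (Akern e') s (KW_Akern e'))). reflexivity. }
  assert (E1 : (fun n => q (eta s) (S n) y) = (fun n => q (Kk s) n y)).
  { extensionality n. unfold q; simpl. rewrite (bnd_eq (Bind_eta_l Kk s KW_Kk)). reflexivity. }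
  rewrite E1 in Sw. pose proof (step_f (Kk s) (KW_Kk s) y) as Sf.
  rewrite (Sum_uniq Sw Sf) in Aw. rewrite E0 in Aw.
  rewrite Kk_eq in Aw.
  rewrite (bnd_eq (Bind_scale (geval e s) (bnd_spec F (g s) (Hg s) KW_F))) in Aw.
  unfold lscale in *. rewrite add_comm. exact Aw.
Qed.

Lemma step_h : f = F.
Proof.
  destruct Hf as [_ [_ L]].
  specialize (L F KW_F step_g).
  extensionality s. extensionality y. apply le_antisym; [|apply F_le].
  destruct (L s) as [m [_ W]]. exists (m y). apply W.
Qed.

Lemma Kleene m : isW m -> forall y, Sum (fun n => q m n y) (bnd f m y).
Proof. intros Hm. rewrite step_h. apply step_f; auto. Qed.

End Kleene.

Lemma Akern_supp {A : PSR} (e : gexp A) x y : supp (Akern e x) y -> y = x.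
Proof.
  intros H. apply (eta_supp (A:=A)). intros C. apply H. unfold Akern, lscale. rewrite C. apply mul_0r.
Qed.

Lemma ch_supp {A : PSR} (g : kernel A) (e : gexp A) (B : state -> Prop) (Hg : KW g)
  (HB : forall s, B s -> forall y, supp (g s) y -> B y) :
  forall n m, isW m -> (forall x, supp m x -> B x) -> forall y, supp (ch g e m n) y -> B y.
Proof.
  induction n; intros m Hm Sm; simpl; auto.
  apply IHn. apply bnd_isW; auto using KW_Kk.
  intros z Hz. apply (Bind_supp B (bnd_spec (Kk g e) m Hm (KW_Kk g e Hg))); [exact Sm| |exact Hz].
  intros x Bx w Hw. apply (Bind_supp B (bnd_spec g (Akern e x) (KW_Akern e x) Hg)); [| |exact Hw].
  intros v Hv. rewrite (Akern_supp e x v Hv); auto. exact HB.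
Qed.

Lemma Sem_supp {A : PSR} (C : cmd A) f : Sem C f -> forall B : state -> Prop,
  (forall x, free B x -> modv C x -> False) -> forall s, B s -> forall y, supp (f s) y -> B y.
Proof.
  induction 1; intros B Hmod s Bs y Hy.
  - rewrite (eta_supp _ _ Hy); auto.
  - apply (Bind_supp B (H1 s)); [| |exact Hy].
    + intros x Hx. apply (IHSem1 B (fun z Fz Mz => Hmod z Fz (or_introl Mz)) s Bs x Hx).
    + intros x Bx z Hz. exact (IHSem2 B (fun z Fz Mz => Hmod z Fz (or_intror Mz)) x Bx z Hz).
  - destruct (H1 s) as [_ W]. destruct (add_nonzero (W y) Hy) as [N|N].
    + exact (IHSem1 B (fun z Fz Mz => Hmod z Fz (or_introl Mz)) s Bs y N).
    + exact (IHSem2 B (fun z Fz Mz => Hmod z Fz (or_intror Mz)) s Bs y N).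
  - change (supp (Akern e s) y) in Hy. rewrite (Akern_supp e s y Hy); auto.
  - pose proof (Sem_KW _ _ H) as Hg.
    assert (Ef : f s = bnd f (eta s)) by (symmetry; apply bnd_eq; apply Bind_eta_l; exact (proj1 H0)).
    rewrite Ef in Hy.
    apply (Sum_supp (fun n => q g e e' (eta s) n) _ B (Kleene g e e' f Hg H0 (eta s) (isW_eta s))); auto.
    intros n z Hz. unfold q in Hz.
    apply (Bind_supp B (bnd_spec (Akern e') _ (ch_isW g e Hg n _ (isW_eta s)) (KW_Akern e'))); [| |exact Hz].
    + apply ch_supp; auto using isW_eta.
      * intros x Bx w Hw. apply (IHSem B Hmod x); auto.
      * intros x Hx. rewrite (eta_supp _ _ Hx); auto.
    + intros x Bx w Hw. rewrite (Akern_supp e' x w Hw); auto.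
  - rewrite (eta_supp _ _ Hy). apply NNPP; intros C. apply (Hmod x); simpl; auto.
    exists s, (eeval E s); auto.
Qed.

Section Inv.
Context {A : PSR}.
Lemma inv_skip (f : kernel A) : Sem Skip f -> f = fun s => eta s.
Proof. intros H; inversion H; auto. Qed.
Lemma inv_seq (C1 C2 : cmd A) f : Sem (Seq C1 C2) f ->
  exists f1 f2, Sem C1 f1 /\ Sem C2 f2 /\ forall s, Bind f2 (f1 s) (f s).
Proof. intros H; inversion H; subst; eauto 6. Qed.
Lemma inv_choice (C1 C2 : cmd A) f : Sem (Choice C1 C2) f ->
  exists f1 f2, Sem C1 f1 /\ Sem C2 f2 /\ forall s, isW (f s) /\ WPlus (f1 s) (f2 s) (f s).
Proof. intros H; inversion H; subst; eauto 6. Qed.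
Lemma inv_assume (e : gexp A) f : Sem (Assume e) f -> f = Akern e.
Proof. intros H; inversion H; auto. Qed.
Lemma inv_iter (C : cmd A) e e' f : Sem (Iter C e e') f -> exists g, Sem C g /\ IsLfp g e e' f.
Proof. intros H; inversion H; subst; eauto. Qed.
Lemma inv_assign x E (f : kernel A) : Sem (Assign x E) f -> f = fun s => eta (update s x (eeval E s)).
Proof. intros H; inversion H; auto. Qed.
End Inv.

Lemma soundness {A : PSR} (P : assn A) C Q : Deriv P C Q -> valid P C Q.
Proof.
  induction 1; intros f Hs m Hm.
  - rewrite (inv_skip f Hs). exists m; split; auto. apply Bind_eta_r; auto.
  - destruct (inv_seq _ _ _ Hs) as (f1 & f2 & H3 & H5 & H6).
    destruct (IHDeriv1 f1 H3 m Hm) as [m1 [B1 R1]].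
    destruct (IHDeriv2 f2 H5 m1 R1) as [m2 [B2 Q2]].
    exists m2; split; auto. apply (Bind_assoc f1 f2 f m m1); auto.
  - destruct (inv_choice _ _ _ Hs) as (f1 & f2 & H3 & H5 & H6).
    destruct (IHDeriv1 f1 H3 m Hm) as [n1 [B1 R1]].
    destruct (IHDeriv2 f2 H5 m Hm) as [n2 [B2 R2]].
    assert (Kf : KW f) by (intros s; apply (H6 s)).
    pose proof (bnd_spec f m (Bind_isW_l B1) Kf) as B.
    exists (bnd f m); split; auto.
    split; [exact (Bind_isW_r B)|]. exists n1, n2. split; auto. split; auto.
    apply (Bind_plus B1 B2 B). intros s y; apply (H6 s).
  - rewrite (inv_assume e f Hs).
    exists (rscale m u). split; [|exists m; auto].
    replace (rscale m u) with (fun y => mul (m y) (geval e y)).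
    + apply (Bind_assume (fun s => geval e s) m (H m Hm)).
    + extensionality y. unfold rscale. destruct (classic (supp m y)) as [S|S].
      * rewrite (H1 m y Hm S); auto.
      * rewrite (not_supp m y S), !mul_0l; auto.
  - destruct (inv_iter _ _ _ _ Hs) as (g & Hsem & Hlfp).
    pose proof (Sem_KW _ _ Hsem) as Hg.
    assert (SemK : Sem (Seq (Assume e) C) (Kk g e)).
    { apply (@Sem_seq A (Assume e) C (Akern e) g (Kk g e)); [exact (Sem_assume e)|exact Hsem|].
      intros s. apply bnd_spec; auto. apply KW_Akern. }
    assert (Ch : forall n, Ps n (ch g e m n) /\ isW (ch g e m n)).
    { induction n.
      - split; auto. destruct (H2 0 _ SemK m Hm) as [m' [B _]]. exact (Bind_isW_l B).
      - destruct IHn as [P1 W1]. destruct (H2 n _ SemK _ P1) as [m' [B Pm']].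
        rewrite ch_S, (bnd_eq B). split; auto. exact (Bind_isW_r B). }
    assert (Hq : forall n, Qs n (q g e e' m n)).
    { intros n. destruct (Ch n) as [P1 W1].
      destruct (H4 n _ (Sem_assume e') _ P1) as [m' [B Qm']].
      unfold q. change (fun s => lscale (geval e' s) (eta s)) with (Akern e') in B.
      rewrite (bnd_eq B); auto. }
    assert (Wm : isW m) by apply (Ch 0).
    pose proof (bnd_spec f m Wm (proj1 Hlfp)) as B.
    exists (bnd f m); split; auto.
    apply (H0 (fun n => q g e e' m n) Hq). split; [exact (Bind_isW_r B)|].
    intros y. apply Kleene; auto.
  - destruct Hm.
  - pose proof (bnd_spec f m (H m Hm) (Sem_KW _ _ Hs)) as B.
    exists (bnd f m); split; auto. exact (Bind_isW_r B).
  - destruct Hm as [m0 [P0 ->]].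
    destruct (IHDeriv f Hs m0 P0) as [m0' [B Q0]].
    exists (lscale u m0'). split. apply Bind_scale; auto. exists m0'; auto.
  - destruct Hm as [Hm|Hm].
    + destruct (IHDeriv1 f Hs m Hm) as [m' [B Qm]]. exists m'; split; auto. left; auto.
    + destruct (IHDeriv2 f Hs m Hm) as [m' [B Qm]]. exists m'; split; auto. right; auto.
  - destruct Hm as [H1 H2].
    destruct (IHDeriv1 f Hs m H1) as [m1 [B1 Q1']].
    destruct (IHDeriv2 f Hs m H2) as [m2 [B2 Q2']].
    rewrite (Bind_uniq B2 B1) in Q2'. exists m1; split; auto. split; auto.
  - destruct Hm as [ms [Hms Wm]].
    assert (Bt : forall t, Bind f (ms t) (bnd f (ms t)) /\ Ph' t (bnd f (ms t))).
    { intros t. destruct (H0 t f Hs (ms t) (Hms t)) as [m' [B Pm']]. rewrite (bnd_eq B). auto. }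
    pose proof (bnd_spec f m (proj1 Wm) (Sem_KW _ _ Hs)) as B.
    exists (bnd f m); split; auto.
    exists (fun t => bnd f (ms t)). split. intros t; apply Bt.
    apply (Bind_sum Wm (fun t => proj1 (Bt t)) B).
  - destruct Hm as [t Ht]. destruct (H0 t f Hs m Ht) as [m' [B Q']].
    exists m'; split; auto. exists t; auto.
  - destruct (IHDeriv f Hs m (H1 m Hm)) as [m' [B Qm]]. exists m'; split; auto.
  - rewrite (inv_assign x E f Hs). destruct Hm as [Wm [m' [B Pm']]]. exists m'; split; auto.
  - destruct Hm as [Pm [Wm Bm]].
    destruct (IHDeriv f Hs m Pm) as [m' [Bd Qm]].
    exists m'; split; auto. split; auto. split; [exact (Bind_isW_r Bd)|].
    apply (Bind_supp B Bd Bm). apply (Sem_supp C f Hs B); auto.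
Qed.

Definition sing {A : PSR} (m : state -> A) : assn A := fun x => x = m.

Lemma IsAssn_sing {A : PSR} (m : state -> A) : isW m -> IsAssn (sing m).
Proof. intros H x ->; auto. Qed.

Lemma compl_assume {A : PSR} (e : gexp A) m : isW m -> Deriv (sing m) (Assume e) (sing (bnd (Akern e) m)).
Proof.
  intros Hm.
  set (pt := fun s => lscale (m s) (@eta A state s)).
  assert (Wpt : forall s, isW (pt s)) by (intros s; apply isW_lscale, isW_eta).
  apply (D_conseq (P := abigoplus (fun s => sing (pt s))) (P' := sing m)
                  (Q := abigoplus (fun s => arscale (sing (pt s)) (geval e s)))).
  - apply IsAssn_sing; auto.
  - apply IsAssn_sing. apply bnd_isW; auto. apply KW_Akern.
  - intros x ->. exists pt. split. intros t; reflexivity.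
    split; auto. intros y. apply (Sum_single' _ y).
    + intros i Hi. unfold pt, lscale. rewrite eta_diff; auto. apply mul_0r.
    + unfold pt, lscale. rewrite eta_same, mul_1r; auto.
  - apply D_choice. intros s. apply D_assume.
    + apply IsAssn_sing; auto.
    + intros x [m0 [-> ->]]. apply isW_rscale; auto.
    + intros m0 y -> Hy. assert (y = s).
      { apply (eta_supp (A:=A)). intros C. apply Hy. unfold pt, lscale. rewrite C. apply mul_0r. }
      subst; auto.
  - intros x [ms [Hms [Wx Sx]]]. unfold sing, Akern.
    rewrite (bnd_eq (Bind_assume (fun s => geval e s) m Hm)).
    extensionality y. apply (Sum_uniq (Sx y)).
    apply (Sum_single' _ y).
    + intros i Hi. destruct (Hms i) as [m0 [-> ->]]. unfold rscale, pt, lscale.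
      rewrite eta_diff; auto. rewrite mul_0r, mul_0l; auto.
    + destruct (Hms y) as [m0 [-> ->]]. unfold rscale, pt, lscale. rewrite eta_same, mul_1r; auto.
Qed.

Lemma completeness_sing {A : PSR} (C : cmd A) f : Sem C f -> forall m, isW m -> Deriv (sing m) C (sing (bnd f m)).
Proof.
  induction 1; intros m Hm.
  - rewrite (bnd_eq (Bind_eta_r m Hm)). apply D_skip, IsAssn_sing; auto.
  - pose proof (Sem_KW _ _ H) as K1. pose proof (Sem_KW _ _ H0) as K2.
    apply (D_seq (R := sing (bnd f1 m))); auto.
    replace (bnd f m) with (bnd f2 (bnd f1 m)).
    + apply IHSem2. apply bnd_isW; auto.
    + symmetry. apply bnd_eq. apply (Bind_assoc f1 f2 f m (bnd f1 m)); auto.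
      apply bnd_spec; auto. apply bnd_spec; auto. apply bnd_isW; auto.
  - pose proof (Sem_KW _ _ H) as K1. pose proof (Sem_KW _ _ H0) as K2.
    assert (Kf : KW f) by (intros s; apply (H1 s)).
    apply (D_conseq (P := sing m) (P' := sing m) (Q := aoplus (sing (bnd f1 m)) (sing (bnd f2 m)))).
    + apply IsAssn_sing; auto.
    + apply IsAssn_sing, bnd_isW; auto.
    + intros x Hx; auto.
    + apply D_plus; auto.
    + intros x [Wx [m1 [m2 [-> [-> Px]]]]]. unfold sing.
      pose proof (Bind_plus (bnd_spec f1 m Hm K1) (bnd_spec f2 m Hm K2) (bnd_spec f m Hm Kf)
        (fun s y => proj2 (H1 s) y)) as Pb.
      extensionality y. specialize (Px y). rewrite Pb in Px. inversion Px; auto.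
  - apply compl_assume; auto.
  - pose proof (Sem_KW _ _ H) as Hg.
    apply (D_iter (fun n => sing (ch g e m n)) (Qs := fun n => sing (q g e e' m n))).
    + apply IsAssn_sing, bnd_isW; auto. exact (proj1 H0).
    + intros ms Hms x [Wx Sx]. unfold sing.
      assert (Ems : ms = fun n => q g e e' m n) by (extensionality n; apply Hms).
      subst ms. extensionality y. apply (Sum_uniq (Sx y)). apply Kleene; auto.
    + intros n. pose proof (ch_isW g e Hg n m Hm) as Wn.
      apply (D_seq (R := sing (bnd (Akern e) (ch g e m n)))).
      * apply compl_assume; auto.
      * replace (ch g e m (S n)) with (bnd g (bnd (Akern e) (ch g e m n))).
        { apply IHSem. apply bnd_isW; auto. apply KW_Akern. }
        rewrite ch_S. symmetry. apply bnd_eq.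
        apply (Bind_assoc (Akern e) g (Kk g e) _ (bnd (Akern e) (ch g e m n))).
        -- apply bnd_spec; auto. apply KW_Akern.
        -- apply bnd_spec; auto. apply bnd_isW; auto. apply KW_Akern.
        -- intros s. apply bnd_spec; auto. apply KW_Akern.
    + intros n. apply compl_assume. apply ch_isW; auto.
  - assert (Kf : KW (fun s => @eta A state (update s x (eeval E s)))) by (intros s; apply isW_eta).
    apply (D_conseq (P := asubst (sing (bnd (fun s => eta (update s x (eeval E s))) m)) E x) (P' := sing m)
                    (Q := sing (bnd (fun s => eta (update s x (eeval E s))) m))).
    + apply IsAssn_sing; auto.
    + apply IsAssn_sing, bnd_isW; auto.
    + intros y ->. split; auto. exists (bnd (fun s => eta (update s x (eeval E s))) m).
      split; [apply bnd_spec; auto|reflexivity].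
    + apply D_assign, IsAssn_sing, bnd_isW; auto.
    + intros y Hy; auto.
Qed.

Theorem theorem4p1 (A : PSR) (C : cmd A) (P Q : assn A) :
  well_formed C -> IsAssn P -> IsAssn Q ->
  (valid P C Q <-> Deriv P C Q).
Proof.
  intros [f Hs] HP HQ. split.
  - intros V.
    apply (D_conseq (P := abigcup (fun t : {m | P m} => sing (proj1_sig t))) (P' := P)
                    (Q := abigcup (fun t : {m | P m} => sing (bnd f (proj1_sig t)))) (Q' := Q) (C := C) HP HQ).
    + intros m Pm. exists (exist _ m Pm). reflexivity.
    + apply D_exists. intros [m Pm]. simpl. apply (completeness_sing C f Hs m (HP m Pm)).
    + intros m' [[m Pm] Hm']. simpl in Hm'. unfold sing in Hm'. subst m'.
      destruct (V f Hs m Pm) as [m' [B Qm]]. rewrite (bnd_eq B); auto.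
  - apply soundness.
Qed.
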